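(* Under the hypotheses of the context, fix $\sigma>0$ and let $z=E+i\eta\in\mathcal D_\sigma$ with $E\ge E_--t^2$. Then for all $i$ and $p\ge2$, $$|V_i-\xi(z)|\ge c\,(t^2+\eta+t\,\mathrm{Im}\,m_{fc,t}(z)),\qquad\int\frac{d\mu_V(x)}{|x-\xi(z)|^p}\le C\frac{t+\sqrt{\kappa+\eta}}{(t^2+\mathrm{Im}\,\xi(z))^{p-1}},$$ and $t+\sqrt{\kappa+\eta}\le C(t+\mathrm{Im}\,m_{fc,t}(z))$.
   Context: $V=\mathrm{diag}(V_1\le\dots\le V_N)$ deterministic real and $\eta_*$-regular: for some $C_V$, $C_V^{-1}\frac{\eta}{\sqrt{|E|+\eta}}\le\mathrm{Im}\,m_V(E+i\eta)\le C_V\frac{\eta}{\sqrt{|E|+\eta}}$ for $-1\le E\le0$, $\eta_*\le\eta\le10$; $C_V^{-1}\sqrt{|E|+\eta}\le\mathrm{Im}\,m_V\le C_V\sqrt{|E|+\eta}$ for $0\le E\le1$, $\eta_*^{1/2}\sqrt{|E|}+\eta_*\le\eta\le10$; no $V_i\in[-1,-\eta_*]$; $\|V\|\le N^{C_V}$; $\eta_*=N^{-\phi_*}$, $0<\phi_*\le2/3$; $\mu_V=\frac1N\sum_i\delta_{V_i}$, $m_V(z)=\int\frac{d\mu_V(x)}{x-z}$. $t=N^{\omega-1/3}$ with $\phi_*/2>1/3-\omega>0$. $m_{fc,t}$ solves $m_{fc,t}(z)=m_V(z+tm_{fc,t}(z))$, $\xi(z)=z+tm_{fc,t}(z)$, $E_-$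 the left edge of the density of $m_{fc,t}$ in $[-3/4,3/4]$, $\kappa=|E-E_-|$. $\mathcal D_\sigma=\{E+i\eta:E_-\le E\le3/4,\,0<\eta\le10,\,\sqrt{\kappa+\eta}\ge N^\sigma/(N\eta)\}\cup\{E+i\eta:-3/4\le E\le E_-,\,N^{\sigma-2/3}\le\eta\le10\}$. *)

(* Defs.v *)
From Stdlib Require Import Reals Lra.
Open Scope R_scope.

Record Cx := mkC { Re : R; Im : R }.

Definition Cadd (z w : Cx) : Cx := mkC (Re z + Re w) (Im z + Im w).
Definition Csub (z w : Cx) : Cx := mkC (Re z - Re w) (Im z - Im w).
Definition Cscal (a : R) (z : Cx) : Cx := mkC (a * Re z) (a * Im z).
Definition Cnorm2 (z : Cx) : R := Re z * Re z + Im z * Im z.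
Definition Cabs (z : Cx) : R := sqrt (Cnorm2 z).
Definition Cinv (z : Cx) : Cx := mkC (Re z / Cnorm2 z) (- Im z / Cnorm2 z).
Definition RtoC (x : R) : Cx := mkC x 0.

Fixpoint fsum (N : nat) (f : nat -> R) : R :=
  match N with O => 0 | S n => fsum n f + f n end.
Definition Csum (N : nat) (f : nat -> Cx) : Cx :=
  mkC (fsum N (fun i => Re (f i))) (fsum N (fun i => Im (f i))).

(* Stieltjes transform of mu_V = (1/N) sum_i delta_{V_i}:
   m_V(z) = (1/N) sum_i 1/(V_i - z);  V_i indexed by i = 0..N-1 *)
Definition mV (N : nat) (V : nat -> R) (z : Cx) : Cx :=
  Cscal (/ INR N) (Csum N (fun i => Cinv (Csub (RtoC (V i)) z))).

(* int dmu_V(x) / |x - w|^p *)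
Definition moment (N : nat) (V : nat -> R) (w : Cx) (p : R) : R :=
  / INR N * fsum N (fun i => / Rpower (Cabs (Csub (RtoC (V i)) w)) p).

Definition eta_regular (N : nat) (V : nat -> R) (etas CV : R) : Prop :=
  (forall E eta, -1 <= E <= 0 -> etas <= eta <= 10 ->
     / CV * (eta / sqrt (Rabs E + eta)) <= Im (mV N V (mkC E eta)) /\
     Im (mV N V (mkC E eta)) <= CV * (eta / sqrt (Rabs E + eta))) /\
  (forall E eta, 0 <= E <= 1 -> sqrt etas * sqrt (Rabs E) + etas <= eta <= 10 ->
     / CV * sqrt (Rabs E + eta) <= Im (mV N V (mkC E eta)) /\
     Im (mV N V (mkC E eta)) <= CV * sqrt (Rabs E + eta)) /\
  (forall i, (i < N)%nat -> ~ (-1 <= V i <= - etas)) /\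
  (forall i, (i < N)%nat -> Rabs (V i) <= Rpower (INR N) CV).

Definition is_mfc (N : nat) (V : nat -> R) (t : R) (m : Cx -> Cx) : Prop :=
  forall z, 0 < Im z ->
    0 < Im (m z) /\ m z = mV N V (Cadd z (Cscal t (m z))).

Definition xi (t : R) (m : Cx -> Cx) (z : Cx) : Cx := Cadd z (Cscal t (m z)).

Definition density_pos (m : Cx -> Cx) (E : R) : Prop :=
  exists r, 0 < r /\
    forall eps, 0 < eps -> exists delta, 0 < delta /\
      forall eta, 0 < eta < delta -> Rabs (Im (m (mkC E eta)) / PI - r) < eps.

Definition is_left_edge (m : Cx -> Cx) (Em : R) : Prop :=
  (forall E, -3/4 <= E <= 3/4 -> density_pos m E -> Em <= E) /\
  (forall b, (forall E, -3/4 <= E <= 3/4 -> density_pos m E -> b <= E) -> b <= Em) /\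
  (exists E, -3/4 <= E <= 3/4 /\ density_pos m E).

Definition in_D (N : nat) (sigma Em : R) (z : Cx) : Prop :=
  let E := Re z in let eta := Im z in
  (Em <= E <= 3/4 /\ 0 < eta <= 10 /\
     sqrt (Rabs (E - Em) + eta) >= Rpower (INR N) sigma / (INR N * eta)) \/
  (-3/4 <= E <= Em /\ Rpower (INR N) (sigma - 2/3) <= eta <= 10).

(* Main.v *)
Require Import Defs.
From Stdlib Require Import Reals Lra Lia.
Open Scope R_scope.

Definition avg (N : nat) (f : nat -> R) : R := / INR N * fsum N f.

Lemma fsum_ext N f g : (forall i, (i < N)%nat -> f i = g i) -> fsum N f = fsum N g.
Proof. induction N; simpl; intros H; auto. rewrite IHN by (intros; apply H; lia). rewrite H by lia. reflexivity. Qed.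

Lemma fsum_le N f g : (forall i, (i < N)%nat -> f i <= g i) -> fsum N f <= fsum N g.
Proof. induction N; simpl; intros H. lra. assert (fsum N f <= fsum N g) by (apply IHN; intros; apply H; lia).
 assert (f N <= g N) by (apply H; lia). lra. Qed.

Lemma fsum_plus N f g : fsum N (fun i => f i + g i) = fsum N f + fsum N g.
Proof. induction N; simpl. lra. rewrite IHN. ring. Qed.

Lemma fsum_scal N c f : fsum N (fun i => c * f i) = c * fsum N f.
Proof. induction N; simpl. ring. rewrite IHN. ring. Qed.

Lemma fsum_const N c : fsum N (fun _ => c) = INR N * c.
Proof. induction N. simpl. ring. cbn [fsum]. rewrite IHN, S_INR. ring. Qed.

Lemma fsum_term N f k : (forall i, (i < N)%nat -> 0 <= f i) -> (k < N)%nat -> f k <= fsum N f.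
Proof. induction N; simpl; intros H Hk. lia.
 assert (0 <= fsum N f). { clear IHN Hk. assert (fsum N (fun _ => 0) <= fsum N f) by (apply fsum_le; intros; apply H; lia).
   rewrite fsum_const in H0. lra. }
 destruct (Nat.eq_dec k N). subst. lra.
 assert (f k <= fsum N f) by (apply IHN; [intros; apply H; lia| lia]). assert (0 <= f N) by (apply H; lia). lra. Qed.

Lemma fsum_abs N f : Rabs (fsum N f) <= fsum N (fun i => Rabs (f i)).
Proof. induction N; simpl. rewrite Rabs_R0; lra. eapply Rle_trans. apply Rabs_triang. lra. Qed.

Lemma INR_pos N : (1 <= N)%nat -> 0 < INR N.
Proof. intros. apply lt_0_INR. lia. Qed.

Lemma avg_le N f g : (1 <= N)%nat -> (forall i, (i < N)%nat -> f i <= g i) -> avg N f <= avg N g.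
Proof. intros HN H. unfold avg. apply Rmult_le_compat_l. left; apply Rinv_0_lt_compat, INR_pos; auto. apply fsum_le; auto. Qed.

Lemma avg_plus N f g : avg N (fun i => f i + g i) = avg N f + avg N g.
Proof. unfold avg. rewrite fsum_plus. ring. Qed.

Lemma avg_scal N c f : avg N (fun i => c * f i) = c * avg N f.
Proof. unfold avg. rewrite fsum_scal. ring. Qed.

Lemma avg_const N c : (1 <= N)%nat -> avg N (fun _ => c) = c.
Proof. intros. unfold avg. rewrite fsum_const. field. apply Rgt_not_eq, INR_pos; auto. Qed.

Lemma avg_ext N f g : (forall i, (i < N)%nat -> f i = g i) -> avg N f = avg N g.
Proof. intros; unfold avg; rewrite (fsum_ext N f g); auto. Qed.

Lemma avg_abs N f : (1 <= N)%nat -> Rabs (avg N f) <= avg N (fun i => Rabs (f i)).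
Proof. intros. unfold avg. rewrite Rabs_mult. rewrite Rabs_right.
 apply Rmult_le_compat_l. left; apply Rinv_0_lt_compat, INR_pos; auto. apply fsum_abs.
 left; apply Rinv_0_lt_compat, INR_pos; auto. Qed.

Lemma avg_term N f k : (1 <= N)%nat -> (forall i, (i < N)%nat -> 0 <= f i) -> (k < N)%nat -> / INR N * f k <= avg N f.
Proof. intros. unfold avg. apply Rmult_le_compat_l. left; apply Rinv_0_lt_compat, INR_pos; auto. apply fsum_term; auto. Qed.

Definition Dd (v a b : R) : R := (v - a) * (v - a) + b * b.
Definition I2 N (V : nat -> R) a b := avg N (fun i => / Dd (V i) a b).
Definition FF N (V : nat -> R) a b := avg N (fun i => b / Dd (V i) a b).
Definition RR N (V : nat -> R) a b := avg N (fun i => (V i - a) / Dd (V i) a b).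

Lemma Dd_pos v a b : 0 < b -> 0 < Dd v a b.
Proof. intros Hb. unfold Dd. pose proof (Rle_0_sqr (v-a)). unfold Rsqr in *. pose proof (Rmult_lt_0_compat b b Hb Hb). lra. Qed.

Lemma Im_mV N V a b : Im (mV N V (mkC a b)) = FF N V a b.
Proof. unfold mV, FF, avg, Cscal, Csum. simpl. f_equal. apply fsum_ext. intros i _.
 unfold Cinv, Csub, RtoC, Cnorm2, Dd. simpl. replace ((0 - b) * (0 - b)) with (b*b) by ring. unfold Rdiv. ring. Qed.

Lemma Re_mV N V a b : Re (mV N V (mkC a b)) = RR N V a b.
Proof. unfold mV, RR, avg, Cscal, Csum. simpl. f_equal. apply fsum_ext. intros i _.
 unfold Cinv, Csub, RtoC, Cnorm2, Dd. simpl. replace ((0 - b) * (0 - b)) with (b*b) by ring. unfold Rdiv. ring. Qed.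

Lemma FF_I2 N V a b : FF N V a b = b * I2 N V a b.
Proof. unfold FF, I2. rewrite <- avg_scal. apply avg_ext. intros. unfold Rdiv. ring. Qed.

Lemma sq_nn x : 0 <= x * x.
Proof. apply Rle_0_sqr. Qed.

Lemma avg_minus N f g : avg N (fun i => f i - g i) = avg N f - avg N g.
Proof. unfold avg. assert (forall n, fsum n (fun i => f i - g i) = fsum n f - fsum n g).
 { induction n; simpl. ring. rewrite IHn. ring. } rewrite H. ring. Qed.

Lemma amgm2 x y d : 0 < d -> 2 * x * y <= d * x * x + / d * y * y.
Proof. intros Hd. assert (d * x * x + / d * y * y - 2 * x * y = / d * ((d * x - y) * (d * x - y))) by (field; lra).
 assert (0 <= / d * ((d * x - y) * (d * x - y))). { apply Rmult_le_pos. left; apply Rinv_0_lt_compat; auto. apply sq_nn. } lra. Qed.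

Lemma sq_div_le y D : 0 < D -> y * y <= D -> (y / D) * (y / D) <= / D.
Proof. intros HD Hy. replace ((y/D)*(y/D)) with ((y*y) * (/D * /D)) by (field; lra).
 apply Rle_trans with (D * (/D * /D)); [| right; field; lra]. apply Rmult_le_compat_r; auto.
 assert (0 < /D) by (apply Rinv_0_lt_compat; auto). apply Rmult_le_pos; lra. Qed.

Lemma prod_bound y1 y2 D1 D2 d : 0 < d -> y1 * y1 <= / D1 -> y2 * y2 <= / D2 ->
  Rabs (y1 * y2) <= (d * / D1 + / d * / D2) / 2.
Proof. intros Hd H1 H2. rewrite Rabs_mult.
 pose proof (amgm2 (Rabs y1) (Rabs y2) d Hd).
 assert (Rabs y1 * Rabs y1 = y1 * y1) by (rewrite <- Rabs_mult; apply Rabs_right; nra).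
 assert (Rabs y2 * Rabs y2 = y2 * y2) by (rewrite <- Rabs_mult; apply Rabs_right; nra).
 assert (0 < / d) by (apply Rinv_0_lt_compat; auto).
 assert (d * Rabs y1 * Rabs y1 <= d * / D1) by (rewrite Rmult_assoc, H0; apply Rmult_le_compat_l; lra).
 assert (/d * Rabs y2 * Rabs y2 <= /d * / D2) by (rewrite Rmult_assoc, H3; apply Rmult_le_compat_l; lra).
 lra. Qed.

Lemma avg_nonneg N f : (1 <= N)%nat -> (forall i, (i < N)%nat -> 0 <= f i) -> 0 <= avg N f.
Proof. intros. rewrite <- (avg_const N 0) by auto. apply avg_le; auto. Qed.

Lemma I2_pos N V a b : (1 <= N)%nat -> 0 < b -> 0 <= I2 N V a b.
Proof. intros. apply avg_nonneg; auto. intros. left; apply Rinv_0_lt_compat, Dd_pos; auto. Qed.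

Section CMP.
Variables (N : nat) (V : nat -> R) (t a1 b1 a2 b2 : R).
Hypotheses (HN : (1 <= N)%nat) (Ht : 0 < t) (Hb1 : 0 < b1) (Hb2 : 0 < b2).
Let u1 i := (V i - a1) / Dd (V i) a1 b1.
Let v1 i := b1 / Dd (V i) a1 b1.
Let u2 i := (V i - a2) / Dd (V i) a2 b2.
Let v2 i := b2 / Dd (V i) a2 b2.
Let A := avg N (fun i => u1 i * u2 i - v1 i * v2 i).
Let B := avg N (fun i => u1 i * v2 i + v1 i * u2 i).

Lemma id_re : (a1 - t * RR N V a1 b1) - (a2 - t * RR N V a2 b2) = (a1 - a2) * (1 - t * A) + (b1 - b2) * (t * B).
Proof.
 assert (RR N V a1 b1 - RR N V a2 b2 = (a1 - a2) * A - (b1 - b2) * B).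
 { transitivity (avg N (fun i => (a1-a2)*(u1 i*u2 i - v1 i*v2 i) - (b1-b2)*(u1 i*v2 i + v1 i*u2 i))).
   - unfold RR. rewrite <- avg_minus. apply avg_ext. intros i _. unfold u1, u2, v1, v2.
     pose proof (Dd_pos (V i) a1 b1 Hb1). pose proof (Dd_pos (V i) a2 b2 Hb2). unfold Dd in *. field. lra.
   - rewrite avg_minus, !avg_scal. reflexivity. }
 nra. Qed.

Lemma id_im : (b1 - t * FF N V a1 b1) - (b2 - t * FF N V a2 b2) = (b1 - b2) * (1 - t * A) - (a1 - a2) * (t * B).
Proof.
 assert (FF N V a1 b1 - FF N V a2 b2 = (a1 - a2) * B + (b1 - b2) * A).
 { transitivity (avg N (fun i => (a1-a2)*(u1 i*v2 i + v1 i*u2 i) + (b1-b2)*(u1 i*u2 i - v1 i*v2 i))).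
   - unfold FF. rewrite <- avg_minus. apply avg_ext. intros i _. unfold u1, u2, v1, v2.
     pose proof (Dd_pos (V i) a1 b1 Hb1). pose proof (Dd_pos (V i) a2 b2 Hb2). unfold Dd in *. field. lra.
   - rewrite avg_plus, !avg_scal. reflexivity. }
 nra. Qed.

Lemma uv_sq : forall i, u1 i * u1 i <= / Dd (V i) a1 b1 /\ v1 i * v1 i <= / Dd (V i) a1 b1 /\
  u2 i * u2 i <= / Dd (V i) a2 b2 /\ v2 i * v2 i <= / Dd (V i) a2 b2.
Proof. intros i. pose proof (Dd_pos (V i) a1 b1 Hb1). pose proof (Dd_pos (V i) a2 b2 Hb2).
 unfold u1, v1, u2, v2. repeat split; apply sq_div_le; auto; unfold Dd; pose proof (sq_nn (V i - a1)); pose proof (sq_nn b1); pose proof (sq_nn (V i - a2)); pose proof (sq_nn b2); lra. Qed.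

Lemma AB_bound d : 0 < d -> t * I2 N V a1 b1 <= 1 -> t * I2 N V a2 b2 <= d * d ->
  Rabs (t * A) <= 2 * d /\ Rabs (t * B) <= 2 * d.
Proof. intros Hd H1 H2.
 assert (Hg : forall f g, (forall i, Rabs (f i) <= (d * / Dd (V i) a1 b1 + / d * / Dd (V i) a2 b2) / 2) ->
     (forall i, Rabs (g i) <= (d * / Dd (V i) a1 b1 + / d * / Dd (V i) a2 b2) / 2) ->
     Rabs (t * avg N (fun i => f i + g i)) <= 2 * d).
 { intros f g Hf Hg. rewrite Rabs_mult, (Rabs_right t) by lra.
   assert (Rabs (avg N (fun i => f i + g i)) <= d * I2 N V a1 b1 + / d * I2 N V a2 b2).
   { eapply Rle_trans. apply avg_abs; auto.
     replace (d * I2 N V a1 b1 + / d * I2 N V a2 b2) with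
       (avg N (fun i => (d * / Dd (V i) a1 b1 + / d * / Dd (V i) a2 b2) / 2 + (d * / Dd (V i) a1 b1 + / d * / Dd (V i) a2 b2) / 2)).
     apply avg_le; auto. intros i _. pose proof (Hf i); pose proof (Hg i). pose proof (Rabs_triang (f i) (g i)). lra.
     unfold I2. rewrite <- !avg_scal, <- avg_plus. apply avg_ext. intros; lra. }
   assert (0 < / d) by (apply Rinv_0_lt_compat; auto).
   assert (t * (d * I2 N V a1 b1 + / d * I2 N V a2 b2) <= 2 * d).
   { replace (t * (d * I2 N V a1 b1 + / d * I2 N V a2 b2)) with (d * (t * I2 N V a1 b1) + / d * (t * I2 N V a2 b2)) by ring.
     assert (d * (t * I2 N V a1 b1) <= d * 1) by (apply Rmult_le_compat_l; lra).
     assert (/ d * (t * I2 N V a2 b2) <= / d * (d * d)) by (apply Rmult_le_compat_l; lra).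
     replace (/ d * (d * d)) with d in H4 by (field; lra). lra. }
   pose proof (Rabs_pos (avg N (fun i => f i + g i))). nra. }
 split.
 - replace A with (avg N (fun i => u1 i * u2 i + (- (v1 i * v2 i)))) by (unfold A; apply avg_ext; intros; ring).
   apply Hg; intros i; destruct (uv_sq i) as (? & ? & ? & ?). apply prod_bound; auto.
   rewrite Rabs_Ropp. apply prod_bound; auto.
 - unfold B. apply Hg; intros i; destruct (uv_sq i) as (? & ? & ? & ?).
   apply prod_bound; auto.
   apply prod_bound; auto. Qed.

Lemma P_lower : t * I2 N V a1 b1 <= 1 -> t * I2 N V a2 b2 <= 1 ->
  t / 2 * avg N (fun i => v1 i * v1 i) <= 1 - t * A.
Proof. intros H1 H2.
 assert (E1 : I2 N V a1 b1 = avg N (fun i => u1 i * u1 i) + avg N (fun i => v1 i * v1 i)).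
 { rewrite <- avg_plus. apply avg_ext. intros i _. unfold u1, v1. pose proof (Dd_pos (V i) a1 b1 Hb1). unfold Dd in *. field. lra. }
 assert (E2 : I2 N V a2 b2 = avg N (fun i => u2 i * u2 i) + avg N (fun i => v2 i * v2 i)).
 { rewrite <- avg_plus. apply avg_ext. intros i _. unfold u2, v2. pose proof (Dd_pos (V i) a2 b2 Hb2). unfold Dd in *. field. lra. }
 assert (HA : A <= (avg N (fun i => u1 i * u1 i) + avg N (fun i => u2 i * u2 i)) / 2).
 { unfold A. apply Rle_trans with (avg N (fun i => (u1 i * u1 i + u2 i * u2 i) / 2)).
   apply avg_le; auto. intros i _. assert (0 <= v1 i * v2 i).
   { unfold v1, v2. pose proof (Dd_pos (V i) a1 b1 Hb1). pose proof (Dd_pos (V i) a2 b2 Hb2).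
     apply Rmult_le_pos; unfold Rdiv; apply Rmult_le_pos; try lra; left; apply Rinv_0_lt_compat; lra. }
   pose proof (sq_nn (u1 i - u2 i)). lra.
   right. replace (avg N (fun i => (u1 i * u1 i + u2 i * u2 i) / 2)) with (avg N (fun i => /2 * (u1 i * u1 i + u2 i * u2 i))) by (apply avg_ext; intros; field).
   rewrite avg_scal, avg_plus. field. }
 assert (0 <= avg N (fun i => v2 i * v2 i)) by (apply avg_nonneg; auto; intros; apply sq_nn).
 assert (0 <= avg N (fun i => v1 i * v1 i)) by (apply avg_nonneg; auto; intros; apply sq_nn).
 rewrite E1 in H1. rewrite E2 in H2. nra. Qed.
End CMP.

Section REG.
Variables (N : nat) (V : nat -> R) (CV etas : R).
Hypotheses (HN : (1 <= N)%nat) (HCV : 0 < CV) (Hreg : eta_regular N V etas CV) (Hetas : 0 < etas).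

Lemma reg1 a b : -1 <= a <= 0 -> etas <= b <= 10 ->
  / CV * (b / sqrt (Rabs a + b)) <= FF N V a b /\ FF N V a b <= CV * (b / sqrt (Rabs a + b)).
Proof. intros. rewrite <- Im_mV. apply Hreg; auto. Qed.

Lemma reg2 a b : 0 <= a <= 1 -> sqrt etas * sqrt a + etas <= b <= 10 ->
  / CV * sqrt (a + b) <= FF N V a b /\ FF N V a b <= CV * sqrt (a + b).
Proof. intros. rewrite <- Im_mV. assert (Ha : Rabs a = a) by (apply Rabs_right; lra).
 destruct Hreg as (_ & H2 & _). pose proof (H2 a b H) as K. rewrite Ha in K. apply K. auto. Qed.

Lemma I2_mono a b b2 : 0 < b <= b2 -> I2 N V a b2 <= I2 N V a b.
Proof. intros. apply avg_le; auto. intros i _. apply Rinv_le_contravar. apply Dd_pos; lra.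
 unfold Dd. nra. Qed.

Lemma I2_cmp a b E0 r : 0 < b -> 0 < r -> (E0 - a) * (E0 - a) + b * b <= r * r ->
  I2 N V E0 r <= 2 * I2 N V a b.
Proof. intros. unfold I2. rewrite <- avg_scal. apply avg_le; auto. intros i _.
 assert (0 < Dd (V i) a b) by (apply Dd_pos; lra). assert (0 < Dd (V i) E0 r) by (apply Dd_pos; lra).
 assert (Dd (V i) a b <= 2 * Dd (V i) E0 r).
 { unfold Dd. pose proof (sq_nn (V i - E0 - (E0 - a))). pose proof (sq_nn b).
   assert (2*((V i-E0)*(V i-E0) + r*r) - ((V i-a)*(V i-a)+b*b) = ((V i-E0)-(E0-a))*((V i-E0)-(E0-a)) + 2*(r*r - (E0-a)*(E0-a) - b*b) + b*b) by ring.
   lra. }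
 replace (2 * / Dd (V i) a b) with (/ (Dd (V i) a b / 2)) by (field; lra).
 apply Rinv_le_contravar; lra. Qed.

Lemma I2_big a b : 10 <= b -> 100 / (b * b) * I2 N V a 10 <= I2 N V a b.
Proof. intros. unfold I2. rewrite <- avg_scal. apply avg_le; auto. intros i _.
 assert (0 < Dd (V i) a b) by (apply Dd_pos; lra). assert (0 < Dd (V i) a 10) by (apply Dd_pos; lra).
 assert (100 * Dd (V i) a b <= b * b * Dd (V i) a 10).
 { unfold Dd. pose proof (sq_nn (V i - a)). assert (100 <= b*b) by nra.
   assert (0 <= (b*b - 100) * ((V i - a)*(V i - a))) by (apply Rmult_le_pos; lra). nra. }
 replace (100 / (b * b) * / Dd (V i) a 10) with (/ (b * b * Dd (V i) a 10 / 100)) by (field; nra).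
 apply Rinv_le_contravar; [ nra | lra]. Qed.

Lemma FF_le_inv a b : 0 < b -> FF N V a b <= / b.
Proof. intros. unfold FF. rewrite <- (avg_const N (/ b)) by auto. apply avg_le; auto. intros i _.
 assert (0 < Dd (V i) a b) by (apply Dd_pos; lra). assert (b * b <= Dd (V i) a b) by (unfold Dd; pose proof (sq_nn (V i - a)); lra).
 unfold Rdiv. apply Rle_trans with (b * / (b*b)). apply Rmult_le_compat_l; [lra|]. apply Rinv_le_contravar; nra.
 right; field; lra. Qed.

Lemma RR_bd a b lam : 0 < b -> 0 < lam -> Rabs (RR N V a b) <= (lam * I2 N V a b + / lam) / 2.
Proof. intros Hb Hl. eapply Rle_trans. apply avg_abs; auto. unfold I2.
 replace ((lam * avg N (fun i => / Dd (V i) a b) + / lam) / 2) with (avg N (fun i => (lam * / Dd (V i) a b + / lam) / 2)).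
 2:{ rewrite (avg_ext N _ (fun i => (/2*lam) * / Dd (V i) a b + /2 * /lam)) by (intros; unfold Rdiv; ring).
     rewrite avg_plus, avg_scal, avg_const by auto. field. lra. }
 apply avg_le; auto. intros i _. set (y := V i - a). set (D := Dd (V i) a b).
 assert (HD : 0 < D) by (apply Dd_pos; lra). assert (Hy : y * y <= D) by (unfold D, Dd, y; pose proof (sq_nn b); lra).
 assert (2 * Rabs y * lam <= lam * lam + D).
 { pose proof (sq_nn (Rabs y - lam)). assert (Rabs y * Rabs y = y * y) by (rewrite <- Rabs_mult; apply Rabs_right; apply Rle_ge, sq_nn). nra. }
 unfold Rdiv. rewrite Rabs_mult, (Rabs_right (/D)) by (left; apply Rinv_0_lt_compat; lra).
 replace ((lam * / D + / lam) * / 2) with ((lam * lam + D) * / (2 * lam * D)) by (field; lra).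
 replace (Rabs y * / D) with ((2 * Rabs y * lam) * / (2 * lam * D)) by (field; lra).
 apply Rmult_le_compat_r; auto. left; apply Rinv_0_lt_compat; nra. Qed.

Lemma I2_left a b : -9/10 <= a <= - 2 * etas -> 0 < b -> I2 N V a b <= 100 + 5 * I2 N V a (- a).
Proof. intros Ha Hb. destruct Hreg as (_ & _ & H3 & _).
 unfold I2. rewrite <- avg_scal. rewrite <- (avg_const N 100) by auto. rewrite <- avg_plus.
 apply avg_le; auto. intros i Hi. specialize (H3 i Hi).
 assert (0 < Dd (V i) a b) by (apply Dd_pos; lra). assert (0 < Dd (V i) a (-a)) by (apply Dd_pos; lra).
 assert (0 <= / Dd (V i) a (-a)) by (left; apply Rinv_0_lt_compat; lra).
 destruct (Rlt_le_dec (V i) (-1)).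
 - assert (/ Dd (V i) a b <= 100).
   { replace 100 with (/ (1/100)) by (field). apply Rinv_le_contravar. lra. unfold Dd. nra. } lra.
 - assert (V i > - etas) by (destruct (Rle_lt_dec (V i) (-etas)); [exfalso; apply H3; lra | lra]).
   assert (Dd (V i) a (-a) <= 5 * Dd (V i) a b) by (unfold Dd; nra).
   assert (/ Dd (V i) a b <= 5 * / Dd (V i) a (-a)).
   { replace (5 * / Dd (V i) a (-a)) with (/ (Dd (V i) a (-a) / 5)) by (field; lra). apply Rinv_le_contravar; lra. }
   lra. Qed.

End REG.

Lemma sqrt_add_le x y : 0 <= x -> 0 <= y -> sqrt (x + y) <= sqrt x + sqrt y.
Proof. intros. pose proof (sqrt_pos x). pose proof (sqrt_pos y).
 apply Rsqr_incr_0_var. unfold Rsqr. rewrite sqrt_sqrt by lra.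
 replace ((sqrt x + sqrt y) * (sqrt x + sqrt y)) with (sqrt x * sqrt x + sqrt y * sqrt y + 2 * (sqrt x * sqrt y)) by ring.
 rewrite !sqrt_sqrt by lra. pose proof (Rmult_le_pos _ _ H1 H2). lra. lra. Qed.

Lemma sqrt_div_le b c : 0 < b -> 0 <= c -> b / sqrt (c + b) <= sqrt b.
Proof. intros. assert (0 < sqrt b) by (apply sqrt_lt_R0; lra).
 assert (sqrt b <= sqrt (c + b)) by (apply sqrt_le_1_alt; lra).
 unfold Rdiv. apply Rle_trans with (b * / sqrt b). apply Rmult_le_compat_l. lra. apply Rinv_le_contravar; lra.
 right. rewrite <- (sqrt_sqrt b) at 1 by lra. field. lra. Qed.

Lemma sol_facts N V t m z : (1 <= N)%nat -> 0 < t -> is_mfc N V t m -> 0 < Im z ->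
  0 < Im (m z) /\ Im (m z) = FF N V (Re (xi t m z)) (Im (xi t m z)) /\
  Re (m z) = RR N V (Re (xi t m z)) (Im (xi t m z)) /\ 0 < Im (xi t m z) /\
  t * I2 N V (Re (xi t m z)) (Im (xi t m z)) < 1 /\
  Re (xi t m z) = Re z + t * Re (m z) /\ Im (xi t m z) = Im z + t * Im (m z).
Proof. intros HN Ht Hm Hz. destruct (Hm z Hz) as [HM Heq].
 assert (Hx : Cadd z (Cscal t (m z)) = mkC (Re (xi t m z)) (Im (xi t m z))) by reflexivity.
 rewrite Hx in Heq.
 assert (Hre : Re (xi t m z) = Re z + t * Re (m z)) by reflexivity.
 assert (Him : Im (xi t m z) = Im z + t * Im (m z)) by reflexivity.
 assert (E1 : Im (m z) = FF N V (Re (xi t m z)) (Im (xi t m z))) by (rewrite Heq at 1; apply Im_mV).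
 assert (E2 : Re (m z) = RR N V (Re (xi t m z)) (Im (xi t m z))) by (rewrite Heq at 1; apply Re_mV).
 assert (Hb : 0 < Im (xi t m z)) by (rewrite Him; nra).
 repeat split; auto.
 rewrite FF_I2 in E1. set (b := Im (xi t m z)) in *. set (I := I2 N V (Re (xi t m z)) b) in *.
 assert (b * (1 - t * I) = b - t * (b * I)) by ring. rewrite <- E1 in H.
 assert (0 < b * (1 - t * I)) by lra.
 destruct (Rlt_le_dec (t*I) 1); auto. nra. Qed.

Section REG2.
Variables (N : nat) (V : nat -> R) (CV etas t : R).
Hypotheses (HN : (1 <= N)%nat) (HCV : 0 < CV) (Hreg : eta_regular N V etas CV) (Hetas : 0 < etas)
  (Ht : 0 < t) (Ht1 : t <= 1/100) (Hsm : 4 * CV * CV * etas <= t * t) (Hsm2 : etas <= t * t).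

Lemma etas_small : etas <= 1/10000.
Proof. nra. Qed.

Lemma floor_lem a b : 0 <= a <= 1 -> 0 < b <= 10 -> t * I2 N V a b < 1 -> sqrt etas * sqrt a + etas <= b.
Proof. intros Ha Hb HI. pose proof etas_small.
 set (s := sqrt etas). set (fl := s * sqrt a + etas).
 assert (Hs : 0 < s) by (apply sqrt_lt_R0; lra). assert (Hss : s * s = etas) by (apply sqrt_sqrt; lra).
 assert (Hsa : 0 <= sqrt a) by apply sqrt_pos. assert (sqrt a <= 1) by (rewrite <- sqrt_1; apply sqrt_le_1_alt; lra).
 assert (s <= 1/100) by (apply Rsqr_incr_0_var; unfold Rsqr; lra).
 destruct (Rle_lt_dec fl b) as [Hfb|Hfb]; auto. exfalso.
 assert (Hfl : 0 < fl) by (unfold fl; nra).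
 assert (fl <= 10) by (unfold fl; nra).
 set (q := sqrt (a + fl)). assert (Hq : 0 < q) by (apply sqrt_lt_R0; lra).
 assert (Hqq : q * q = a + fl) by (apply sqrt_sqrt; lra).
 assert (sqrt a <= q) by (apply sqrt_le_1_alt; lra).
 assert (s <= q) by (apply sqrt_le_1_alt; unfold fl; nra).
 assert (Hfl2 : fl <= 2 * s * q) by (unfold fl; nra).
 destruct (reg2 N V CV etas Hreg a fl Ha) as [R1 _]. split; [unfold fl, s; lra | lra].
 fold q in R1. rewrite FF_I2 in R1.
 assert (I2 N V a fl <= I2 N V a b) by (apply (I2_mono N V HN); lra).
 assert (2 * CV * s <= t).
 { destruct (Rle_lt_dec (2*CV*s) t); auto. assert (0 <= t) by lra. nra. }
 (* t * I2 a fl >= t * /CV * q / fl >= 1 *)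
 assert (/ CV * q <= fl * I2 N V a fl) by lra.
 assert (Hq8 : q <= CV * fl * I2 N V a fl).
 { apply Rmult_le_reg_l with (/ CV). apply Rinv_0_lt_compat; lra. replace (/ CV * (CV * fl * I2 N V a fl)) with (fl * I2 N V a fl) by (field; lra). lra. }
 assert (q <= CV * (2 * s * q) * I2 N V a fl).
 { eapply Rle_trans. apply Hq8. apply Rmult_le_compat_r. apply I2_pos; auto; lra. apply Rmult_le_compat_l; lra. }
 assert (1 <= 2 * CV * s * I2 N V a fl).
 { apply Rmult_le_reg_l with q; auto. nra. }
 assert (0 <= I2 N V a fl) by (apply I2_pos; auto; lra).
 nra. Qed.

Lemma FF_big a b : 10 <= b -> 10 / b * FF N V a 10 <= FF N V a b.
Proof. intros. rewrite !FF_I2. pose proof (I2_big N V HN a b H).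
 replace (10 / b * (10 * I2 N V a 10)) with (b * (100 / (b * b) * I2 N V a 10)) by (field; lra).
 apply Rmult_le_compat_l; lra. Qed.

Lemma M_upper a b : -1 <= a <= 1 -> 0 < b -> t * I2 N V a b < 1 ->
  FF N V a b <= (CV + 1) * (t + sqrt (Rmax a 0) + sqrt b).
Proof. intros Ha Hb HI. pose proof etas_small.
 pose proof (sqrt_pos (Rmax a 0)). pose proof (sqrt_pos b).
 assert (Hup : forall X, 0 <= X -> X <= t + sqrt (Rmax a 0) + sqrt b -> X <= (CV + 1) * (t + sqrt (Rmax a 0) + sqrt b)).
 { intros X HX1 HX2. nra. }
 assert (0 <= FF N V a b) by (rewrite FF_I2; apply Rmult_le_pos; [lra| apply I2_pos; auto]).
 destruct (Rlt_le_dec 10 b) as [Hb10|Hb10].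
 - apply Hup; auto. pose proof (FF_le_inv N V HN a b Hb).
   assert (/ b <= 1) by (replace 1 with (/1) by field; apply Rinv_le_contravar; lra).
   assert (1 <= sqrt b) by (rewrite <- sqrt_1; apply sqrt_le_1_alt; lra). lra.
 - destruct (Rle_lt_dec 0 a) as [Ha0|Ha0].
   + assert (Hf : sqrt etas * sqrt a + etas <= b) by (apply floor_lem; auto; lra).
     destruct (reg2 N V CV etas Hreg a b) as [_ R2]; [lra | lra | ].
     rewrite Rmax_left by lra. pose proof (sqrt_add_le a b ltac:(lra) ltac:(lra)).
     pose proof (sqrt_pos a). nra.
   + destruct (Rle_lt_dec etas b) as [He|He].
     * destruct (reg1 N V CV etas Hreg a b) as [_ R1]; [lra | lra | ].
       pose proof (sqrt_div_le b (Rabs a) Hb (Rabs_pos a)). nra.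
     * apply Hup; auto. rewrite FF_I2.
       assert (b * I2 N V a b <= b / t).
       { unfold Rdiv. apply Rmult_le_compat_l. lra. apply Rmult_le_reg_l with t. lra. rewrite Rinv_r by lra. lra. }
       assert (b / t <= t).
       { unfold Rdiv. apply Rmult_le_reg_r with t. lra. rewrite Rmult_assoc, Rinv_l by lra. lra. }
       lra. Qed.

Lemma M_lower_pos a b : 0 <= a <= 1 -> 0 < b < 11 -> t * I2 N V a b < 1 ->
  / (4 * CV) * sqrt (a + b) <= FF N V a b.
Proof. intros Ha Hb HI. pose proof etas_small. pose proof (sqrt_pos (a + b)).
 assert (0 < / CV) by (apply Rinv_0_lt_compat; lra).
 replace (/ (4 * CV)) with (/4 * / CV) by (field; lra).
 destruct (Rle_lt_dec b 10) as [Hb10|Hb10].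
 - assert (Hf : sqrt etas * sqrt a + etas <= b) by (apply floor_lem; auto; lra).
   destruct (reg2 N V CV etas Hreg a b) as [R1 _]; [lra | lra | ]. nra.
 - pose proof (FF_big a b ltac:(lra)).
   assert (Hf : sqrt etas * sqrt a + etas <= 10).
   { assert (sqrt etas <= 1) by (rewrite <- sqrt_1; apply sqrt_le_1_alt; lra).
     assert (sqrt a <= 1) by (rewrite <- sqrt_1; apply sqrt_le_1_alt; lra). pose proof (sqrt_pos etas). pose proof (sqrt_pos a). nra. }
   destruct (reg2 N V CV etas Hreg a 10) as [R1 _]; [lra | lra | ].
   assert (sqrt (a + b) <= 2 * sqrt (a + 10)).
   { replace (2 * sqrt (a + 10)) with (sqrt (4 * (a + 10))). apply sqrt_le_1_alt; lra.
     rewrite sqrt_mult by lra. replace 4 with (2*2) by ring. rewrite sqrt_square; lra. }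
   assert (10 / b >= 10 / 11).
   { unfold Rdiv. apply Rle_ge. apply Rmult_le_compat_l. lra. apply Rinv_le_contravar; lra. }
   pose proof (sqrt_pos (a + 10)).
   assert (0 <= FF N V a 10) by (rewrite FF_I2; apply Rmult_le_pos; [lra| apply I2_pos; auto; lra]).
   nra. Qed.

Lemma M_lower_neg a b : -1 <= a <= 0 -> etas <= b < 11 ->
  / (4 * CV) * (b / sqrt (Rabs a + b)) <= FF N V a b.
Proof. intros Ha Hb. pose proof etas_small.
 assert (0 < / CV) by (apply Rinv_0_lt_compat; lra).
 replace (/ (4 * CV)) with (/4 * / CV) by (field; lra).
 assert (Hra : Rabs a <= 1) by (rewrite Rabs_left1 by lra; lra).
 assert (Hq : 0 < sqrt (Rabs a + b)) by (apply sqrt_lt_R0; pose proof (Rabs_pos a); lra).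
 assert (0 <= b / sqrt (Rabs a + b)) by (unfold Rdiv; apply Rmult_le_pos; [lra | left; apply Rinv_0_lt_compat; lra]).
 destruct (Rle_lt_dec b 10) as [Hb10|Hb10].
 - destruct (reg1 N V CV etas Hreg a b) as [R1 _]; [lra | lra | ]. nra.
 - pose proof (FF_big a b ltac:(lra)).
   destruct (reg1 N V CV etas Hreg a 10) as [R1 _]; [lra | lra | ].
   assert (sqrt (Rabs a + 10) <= 4).
   { replace 4 with (sqrt 16). apply sqrt_le_1_alt; lra. replace 16 with (4*4) by ring. rewrite sqrt_square; lra. }
   assert (0 < sqrt (Rabs a + 10)) by (apply sqrt_lt_R0; pose proof (Rabs_pos a); lra).
   assert (10 / sqrt (Rabs a + 10) >= 10 / 4).
   { unfold Rdiv. apply Rle_ge. apply Rmult_le_compat_l. lra. apply Rinv_le_contravar; lra. }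
   pose proof (sqrt_div_le b (Rabs a) ltac:(lra) (Rabs_pos a)).
   assert (sqrt b <= 4).
   { replace 4 with (sqrt 16). apply sqrt_le_1_alt; lra. replace 16 with (4*4) by ring. rewrite sqrt_square; lra. }
   assert (10 / b >= 10 / 11).
   { unfold Rdiv. apply Rle_ge. apply Rmult_le_compat_l. lra. apply Rinv_le_contravar; lra. }
   assert (/ CV * (10 / sqrt (Rabs a + 10)) >= / CV * (10/4)) by (apply Rle_ge, Rmult_le_compat_l; lra).
   assert (FF N V a 10 >= / CV * (10/4)) by lra.
   assert (10 / b * FF N V a 10 >= 10/11 * (/ CV * (10/4))).
   { apply Rle_ge. apply Rmult_le_compat; try lra. }
   nra. Qed.

End REG2.

Lemma abs_le_bt x y : Rabs x <= y -> -y <= x <= y.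
Proof. unfold Rabs; destruct Rcase_abs; lra. Qed.
Lemma abs_bt_le x y : -y <= x <= y -> Rabs x <= y.
Proof. unfold Rabs; destruct Rcase_abs; lra. Qed.

Lemma cmp_main N V t a1 b1 a2 b2 : (1 <= N)%nat -> 0 < t -> 0 < b1 -> 0 < b2 ->
  t * I2 N V a1 b1 <= 1 -> t * I2 N V a2 b2 <= 1/64 ->
  exists P Q, (a1 - t * RR N V a1 b1) - (a2 - t * RR N V a2 b2) = (a1 - a2) * P + (b1 - b2) * Q /\
    3/4 <= P <= 5/4 /\ Rabs Q <= 1/4.
Proof. intros HN Ht Hb1 Hb2 H1 H2. pose proof (id_re N V t a1 b1 a2 b2 Ht Hb1 Hb2) as E.
 destruct (AB_bound N V t a1 b1 a2 b2 HN Ht Hb1 Hb2 (1/8)) as [HA HB]; [lra|lra|lra|].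
 eexists; eexists; split; [exact E|]. apply abs_le_bt in HA. split; [lra|]. lra. Qed.

Lemma cau_main N V t a1 b1 a2 b2 : (1 <= N)%nat -> 0 < t -> 0 < b1 -> 0 < b2 ->
  t * I2 N V a1 b1 <= 1 -> t * I2 N V a2 b2 <= 1 ->
  exists P Q, (a1 - t * RR N V a1 b1) - (a2 - t * RR N V a2 b2) = (a1 - a2) * P + (b1 - b2) * Q /\
    (b1 - t * FF N V a1 b1) - (b2 - t * FF N V a2 b2) = (b1 - b2) * P - (a1 - a2) * Q /\
    t / 2 * avg N (fun i => (b1 / Dd (V i) a1 b1) * (b1 / Dd (V i) a1 b1)) <= P.
Proof. intros HN Ht Hb1 Hb2 H1 H2. pose proof (id_re N V t a1 b1 a2 b2 Ht Hb1 Hb2) as E.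
 pose proof (id_im N V t a1 b1 a2 b2 Ht Hb1 Hb2) as E2.
 pose proof (P_lower N V t a1 b1 a2 b2 HN Ht Hb1 Hb2 H1 H2) as HP.
 eexists; eexists; split; [exact E|]. split; [exact E2|]. exact HP. Qed.

Lemma b_lt_11 N V t a b eta : (1 <= N)%nat -> 0 < t <= 1 -> 0 < b -> eta <= 10 -> b = eta + t * FF N V a b -> b < 11.
Proof. intros HN Ht Hb He E. pose proof (FF_le_inv N V HN a b Hb).
 destruct (Rlt_le_dec b 11); auto.
 assert (/ b <= / 11) by (apply Rinv_le_contravar; lra).
 assert (t * FF N V a b <= 1 * (/ 11)).
 { apply Rmult_le_compat; try lra. rewrite FF_I2. apply Rmult_le_pos. lra. apply I2_pos; auto. }
 lra. Qed.

Lemma tRR_bound N V t a b : (1 <= N)%nat -> 0 < t -> 0 < b -> t * I2 N V a b <= 1 -> Rabs (t * RR N V a b) <= sqrt t.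
Proof. intros HN Ht Hb HI. set (s := sqrt t). assert (Hs : 0 < s) by (apply sqrt_lt_R0; lra).
 assert (Hss : s * s = t) by (apply sqrt_sqrt; lra).
 pose proof (RR_bd N V HN a b s Hb Hs). rewrite Rabs_mult, (Rabs_right t) by lra.
 apply Rle_trans with (t * ((s * I2 N V a b + / s) / 2)). apply Rmult_le_compat_l; lra.
 replace (t * ((s * I2 N V a b + / s) / 2)) with ((s * (t * I2 N V a b) + t / s) / 2) by (field; lra).
 replace (t / s) with s by (rewrite <- Hss; field; lra). nra. Qed.

Definition Lc (CV : R) := 204800 * CV * CV + 2.

Lemma left_bound N V CV etas t a b : (1 <= N)%nat -> 0 < CV -> eta_regular N V etas CV -> 0 < etas ->
  0 < t -> t <= 1/12800 -> etas <= t * t -> -9/10 <= a <= - Lc CV * t * t -> 0 < b ->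
  t * I2 N V a b <= 1/64.
Proof. intros HN HCV Hreg He Ht Ht1 Hs Ha Hb. unfold Lc in Ha.
 assert (HL : 2 * etas <= (204800 * CV * CV + 2) * t * t).
 { assert (0 <= 204800 * CV * CV * t * t) by (pose proof (sq_nn CV); pose proof (sq_nn t); nra). nra. }
 pose proof (I2_left N V CV etas HN Hreg He a b ltac:(lra) Hb).
 destruct (reg1 N V CV etas Hreg a (-a)) as [_ R1]; [lra| lra |].
 rewrite FF_I2 in R1. rewrite Rabs_left1 in R1 by lra. replace (- a + - a) with (-2 * a) in R1 by ring.
 set (q := sqrt (-2 * a)) in *. assert (Hq : 0 < q) by (apply sqrt_lt_R0; lra).
 assert (Hq2 : 640 * CV * t <= q).
 { unfold q. rewrite <- (sqrt_square (640 * CV * t)) by (apply Rmult_le_pos; lra).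
   apply sqrt_le_1_alt. assert (0 <= CV * CV * t * t) by (pose proof (sq_nn (CV*t)); nra). nra. }
 assert (HI : I2 N V a (-a) <= CV / q).
 { apply Rmult_le_reg_l with (-a). lra. replace (- a * (CV / q)) with (CV * (- a / q)) by (field; lra). lra. }
 assert (t * (CV / q) <= 1 / 640).
 { unfold Rdiv. replace (t * (CV * / q)) with ((640 * CV * t) * / q / 640) by (field; lra).
   apply Rmult_le_reg_r with 640. lra. replace (640 * CV * t * / q / 640 * 640) with (640 * CV * t * / q) by (field; lra).
   replace (1 / 640 * 640) with 1 by field. apply Rmult_le_reg_r with q. lra.
   rewrite Rmult_assoc, Rinv_l by lra. lra. }
 assert (t * I2 N V a b <= t * (100 + 5 * (CV / q))) by (apply Rmult_le_compat_l; lra).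
 lra. Qed.

Lemma small_seq e0 d : 0 < e0 -> 0 < d -> exists N : nat, forall n, (n >= N)%nat -> e0 / INR (S n) < d.
Proof. intros. destruct (INR_archimed d e0 H0) as [N HN]. exists N. intros n Hn.
 assert (INR N <= INR n) by (apply le_INR; lia). rewrite S_INR.
 assert (0 < INR N) by (destruct N; [simpl in HN; lra| apply lt_0_INR; lia]).
 apply Rmult_lt_reg_r with (INR n + 1). lra. unfold Rdiv. rewrite Rmult_assoc, Rinv_l by lra. nra. Qed.

Lemma pos_seq e0 n : 0 < e0 -> 0 < e0 / INR (S n) <= e0.
Proof. intros. rewrite S_INR. pose proof (pos_INR n). split. apply Rdiv_lt_0_compat; lra.
 unfold Rdiv. replace e0 with (e0 * 1) at 2 by ring. apply Rmult_le_compat_l. lra.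
 replace 1 with (/1) by field. apply Rinv_le_contravar; lra. Qed.

Lemma lim_exists (g : R -> R) (e0 K m0 : R) : 0 < e0 -> 0 <= K ->
  (forall x y, 0 < x <= e0 -> 0 < y <= e0 -> Rabs (g x - g y) <= K * Rabs (x - y)) ->
  (forall x, 0 < x <= e0 -> m0 <= g x) ->
  exists l, m0 <= l /\ forall eps, 0 < eps -> exists d, 0 < d /\ forall x, 0 < x < d -> Rabs (g x - l) < eps.
Proof. intros He0 HK HL Hm.
 set (u := fun n : nat => g (e0 / INR (S n))).
 assert (Hc : Cauchy_crit u).
 { intros eps Heps. destruct (small_seq e0 (eps / (K + 1)) He0) as [N HN]. apply Rdiv_lt_0_compat; lra.
   exists N. intros n m Hn Hm'. unfold Rdist, u.
   pose proof (pos_seq e0 n He0). pose proof (pos_seq e0 m He0).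
   eapply Rle_lt_trans. apply HL; auto.
   pose proof (HN n Hn). pose proof (HN m Hm').
   assert (Rabs (e0 / INR (S n) - e0 / INR (S m)) < eps / (K + 1)) by (apply Rabs_def1; lra).
   assert (eps / (K + 1) * (K + 1) = eps) by (field; lra).
   pose proof (Rabs_pos (e0 / INR (S n) - e0 / INR (S m))). nra. }
 destruct (R_complete u Hc) as [l Hl].
 exists l. split.
 - destruct (Rle_lt_dec m0 l) as [|Hlt]; auto. exfalso.
   destruct (Hl (m0 - l)) as [N HN]. lra. specialize (HN N (Nat.le_refl N)). unfold Rdist, u in HN.
   pose proof (Hm (e0 / INR (S N)) (pos_seq e0 N He0)). apply Rabs_def2 in HN. lra.
 - intros eps Heps. destruct (Hl (eps / 2)) as [N1 HN1]. lra.
   set (d := Rmin e0 (eps / (2 * (K + 1)))).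
   assert (Hd : 0 < d) by (unfold d; apply Rmin_glb_lt; [lra| apply Rdiv_lt_0_compat; lra]).
   exists d. split; auto. intros x Hx.
   destruct (small_seq e0 d He0 Hd) as [N2 HN2].
   set (n := (N1 + N2)%nat).
   pose proof (HN1 n ltac:(unfold n; lia)) as A1. unfold Rdist, u in A1.
   pose proof (HN2 n ltac:(unfold n; lia)) as A2. pose proof (pos_seq e0 n He0) as A3.
   assert (d <= e0) by apply Rmin_l. assert (d <= eps / (2 * (K + 1))) by apply Rmin_r.
   pose proof (HL x (e0 / INR (S n)) ltac:(lra) A3) as A4.
   assert (Rabs (x - e0 / INR (S n)) < d) by (apply Rabs_def1; lra).
   assert (K * Rabs (x - e0 / INR (S n)) <= K * d) by (apply Rmult_le_compat_l; lra).
   assert (K * d <= eps / 2).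
   { apply Rle_trans with (K * (eps / (2 * (K + 1)))). apply Rmult_le_compat_l; lra.
     unfold Rdiv. rewrite Rinv_mult. assert (K * / (K+1) <= 1). { apply Rmult_le_reg_r with (K+1). lra. rewrite Rmult_assoc, Rinv_l by lra. lra. }
     assert (0 < eps * / 2) by lra. nra. }
   replace (g x - l) with ((g x - g (e0 / INR (S n))) + (g (e0 / INR (S n)) - l)) by ring.
   eapply Rle_lt_trans. apply Rabs_triang. lra. Qed.

Lemma sqrt_amgm x k : 0 <= x -> 0 <= k -> k * sqrt x <= (k * k + x) / 2.
Proof. intros. pose proof (sq_nn (k - sqrt x)). pose proof (sqrt_sqrt x H). nra. Qed.

Definition CUc (CV : R) := CV + 1.
Definition K1c (CV : R) := 2 * (CUc CV + CUc CV * CUc CV).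
Definition Cloc (CV : R) := K1c CV + 3.
Definition Khic (CV : R) := 2 * Lc CV + 2.
Definition tau0 (CV : R) := / (12800 * (Lc CV + Khic CV + Cloc CV + 1)).

Section MAIN.
Variables (N : nat) (V : nat -> R) (m : Cx -> Cx) (Em CV etas t : R).
Hypotheses (HN : (1 <= N)%nat) (HCV : 0 < CV) (Hreg : eta_regular N V etas CV) (He : 0 < etas)
  (Ht : 0 < t) (Hts : t <= tau0 CV) (Hs1 : (16 * CV * CV + 1) * etas <= t * t)
  (Hm : is_mfc N V t m) (Hedge : is_left_edge m Em).

Lemma consts_pos : 2 <= Lc CV /\ 0 < CUc CV /\ 0 <= K1c CV /\ 3 <= Cloc CV /\ 0 < Khic CV.
Proof. unfold Khic, Cloc, K1c, CUc, Lc. pose proof (sq_nn CV). pose proof (sq_nn (CV+1)).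
 assert (0 <= 204800 * CV * CV) by (rewrite Rmult_assoc; apply Rmult_le_pos; lra). repeat split; lra. Qed.

Lemma t_small : t <= 1/12800 /\ (Lc CV + Khic CV + Cloc CV + 1) * t <= 1/12800.
Proof. destruct consts_pos as (? & ? & ? & ? & ?). unfold tau0 in Hts.
 set (X := Lc CV + Khic CV + Cloc CV + 1) in *. assert (1 <= X) by (unfold X; lra).
 assert (X * t <= 1/12800).
 { apply Rle_trans with (X * / (12800 * X)). apply Rmult_le_compat_l; lra. right; field; lra. }
 split; nra. Qed.

Lemma s_facts : 4 * CV * CV * etas <= t * t /\ etas <= t * t /\ 16 * CV * CV * etas <= t * t /\ t <= 1/100.
Proof. pose proof (sq_nn CV). destruct t_small. repeat split; nra. Qed.

Lemma sqrt_t_small : sqrt t <= 1/100.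
Proof. destruct t_small. replace (1/100) with (sqrt (1/10000)). apply sqrt_le_1_alt; lra.
 replace (1/10000) with ((1/100)*(1/100)) by field. rewrite sqrt_square; lra. Qed.

Lemma solz z : 0 < Im z <= 10 -> -3/4 <= Re z <= 3/4 ->
  -4/5 <= Re (xi t m z) <= 4/5 /\ 0 < Im (xi t m z) < 11 /\
  t * I2 N V (Re (xi t m z)) (Im (xi t m z)) < 1 /\
  0 < Im (m z) /\ Im (m z) = FF N V (Re (xi t m z)) (Im (xi t m z)) /\
  Re z = Re (xi t m z) - t * RR N V (Re (xi t m z)) (Im (xi t m z)) /\
  Im z = Im (xi t m z) - t * FF N V (Re (xi t m z)) (Im (xi t m z)).
Proof. intros Hz1 Hz2. destruct (sol_facts N V t m z HN Ht Hm ltac:(lra)) as (HM & E1 & E2 & Hb & HI & Ea & Eb).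
 pose proof (tRR_bound N V t (Re (xi t m z)) _ HN Ht Hb ltac:(lra)). pose proof sqrt_t_small. destruct t_small.
 rewrite <- E2 in H. apply abs_le_bt in H.
 assert (Im (xi t m z) < 11).
 { apply (b_lt_11 N V t (Re (xi t m z)) (Im (xi t m z)) (Im z)); [auto| lra | auto | lra | rewrite <- E1; exact Eb]. }
 repeat split; try lra. rewrite E2 in Ea; lra. rewrite E1 in Eb; lra. Qed.

Definition ar := - Lc CV * t * t.
Definition br := t * t.
Definition Er := ar - t * RR N V ar br.

Lemma ref_facts : -9/10 <= ar <= - Lc CV * t * t /\ 0 < br /\ t * I2 N V ar br <= 1/64 /\ Rabs Er <= 1/50
  /\ Lc CV * t * t <= t / 12800.
Proof. destruct consts_pos as (HL & _). destruct t_small as [T1 T2]. destruct s_facts as (S1 & S2 & S3 & S4).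
 assert (HLt : Lc CV * t * t <= t / 12800).
 { assert (Lc CV * t <= 1/12800) by (destruct consts_pos as (? & ? & ? & ? & ?); nra). nra. }
 assert (Har : -9/10 <= ar <= - Lc CV * t * t) by (unfold ar; split; nra).
 assert (Hbr : 0 < br) by (unfold br; nra).
 assert (HI : t * I2 N V ar br <= 1/64) by (apply (left_bound N V CV etas t ar br); auto; lra).
 repeat split; try lra. unfold Er.
 pose proof (tRR_bound N V t ar br HN Ht Hbr ltac:(lra)). pose proof sqrt_t_small. apply abs_le_bt in H.
 apply abs_bt_le. unfold ar in *. nra. Qed.

Lemma Lo E' : -3/4 <= E' <= 3/4 -> density_pos m E' -> Er - Cloc CV * t * t <= E'.
Proof. intros HE [r [Hr Hd]]. destruct (Hd (r/2)) as [d0 [Hd0 Hd1]]. lra.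
 destruct ref_facts as (Har & Hbr & HIr & HEr & HLt). destruct t_small as [T1 T2]. destruct s_facts as (S1 & S2 & S3 & S4).
 destruct consts_pos as (CP1 & CP2 & CP3 & CP4 & CP5).
 pose proof PI_RGT_0 as Hpi.
 set (mu := PI * r / 2). assert (Hmu : 0 < mu) by (unfold mu; nra).
 set (e := Rmin (d0 / 2) (Rmin (t * t) (t * mu / 2))).
 assert (He1 : 0 < e) by (unfold e; repeat apply Rmin_glb_lt; nra).
 assert (He2 : e <= d0 / 2) by apply Rmin_l.
 assert (He3 : e <= t * t) by (unfold e; eapply Rle_trans; [apply Rmin_r| apply Rmin_l]).
 assert (He4 : e <= t * mu / 2) by (unfold e; eapply Rle_trans; [apply Rmin_r| apply Rmin_r]).
 set (z := mkC E' e). assert (Htt : t * t <= 1) by nra.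
 destruct (solz z) as (Ha & Hb & HI & HM & EM & ER & EI); [unfold z; simpl; lra | unfold z; simpl; lra | ].
 set (a := Re (xi t m z)) in *. set (b := Im (xi t m z)) in *. set (M := Im (m z)) in *.
 assert (HMmu : mu < M).
 { specialize (Hd1 e ltac:(lra)). apply Rabs_def2 in Hd1. destruct Hd1 as [_ Hd1]. fold z M in Hd1.
   unfold mu. assert (r / 2 < M / PI) by lra.
   apply Rmult_lt_reg_r with (/ PI). apply Rinv_0_lt_compat; lra.
   replace (PI * r / 2 * / PI) with (r / 2) by (field; lra). exact H. }
 assert (EB : b = e + t * M) by (unfold z in EI; simpl in EI; rewrite EM; lra).
 rewrite FF_I2 in EM. set (I := I2 N V a b) in *.
 assert (Hbt : t * mu < b) by (assert (t * mu < t * M) by (apply Rmult_lt_compat_l; lra); lra).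
 assert (HI2 : 1/2 <= t * I).
 { destruct (Rle_lt_dec (1/2) (t*I)) as [|Hc]; auto. exfalso.
   assert (e = b * (1 - t * I)) by (rewrite EM in EB; nra).
   assert (b * (1 - t * I) > b * (1/2)) by (apply Rmult_lt_compat_l; lra). lra. }
 assert (Haar : ar < a).
 { destruct (Rlt_le_dec ar a) as [|Hc]; auto. exfalso.
   pose proof (left_bound N V CV etas t a b HN HCV Hreg He Ht T1 S2 ltac:(lra) ltac:(lra)). fold I in H. lra. }
 destruct (cmp_main N V t a b ar br HN Ht ltac:(lra) Hbr ltac:(fold I; lra) HIr) as (P & Q & EPQ & HP & HQ).
 simpl in ER. rewrite <- ER in EPQ. fold Er in EPQ.
 pose proof (M_upper N V CV etas t HN HCV Hreg He Ht S4 S1 S2 a b ltac:(lra) ltac:(lra) ltac:(fold I; lra)) as MU.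
 rewrite FF_I2 in MU. fold I in MU. rewrite <- EM in MU. change (CV + 1) with (CUc CV) in MU.
 set (A := Rmax a 0) in *. assert (HA0 : 0 <= A) by apply Rmax_r.
 assert (HA1 : A <= a - ar) by (unfold A; apply Rmax_lub; unfold ar in *; nra).
 set (CU := CUc CV) in *.
 pose proof (sqrt_amgm A (CU * t) HA0 ltac:(nra)). pose proof (sqrt_amgm b (CU * t) ltac:(lra) ltac:(nra)).
 assert (Hb2 : b <= 2 * e + 2 * CU * t * t + 2 * CU * CU * t * t + A).
 { assert (t * M <= t * (CU * (t + sqrt A + sqrt b))) by (apply Rmult_le_compat_l; lra).
   lra. }
 assert (P1 : (a - ar) * P >= 3/4 * (a - ar)) by (apply Rle_ge; rewrite (Rmult_comm (3/4)); apply Rmult_le_compat_l; lra).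
 assert (Q1 : (b - br) * Q >= - 1/4 * (b + br)).
 { assert (Rabs ((b - br) * Q) <= 1/4 * (b + br)).
   { rewrite Rabs_mult. apply Rle_trans with (Rabs (b - br) * (1/4)). apply Rmult_le_compat_l; [apply Rabs_pos| lra].
     assert (Rabs (b - br) <= b + br) by (apply abs_bt_le; lra). lra. }
   apply abs_le_bt in H1. lra. }
 unfold Cloc, K1c. fold CU. unfold br in *. assert (0 <= CU*t*t) by (apply Rmult_le_pos; [apply Rmult_le_pos|]; lra). assert (0 <= CU*CU*t*t) by (repeat apply Rmult_le_pos; lra). assert (0 <= t*t) by nra. lra. Qed.
End MAIN.

Lemma sq_le_abs x y : Rabs x <= y -> x * x <= y * y.
Proof. intros. assert (Rabs x * Rabs x = x * x) by (rewrite <- Rabs_mult; apply Rabs_right, Rle_ge, sq_nn).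
 pose proof (Rabs_pos x). nra. Qed.

Lemma mul_np x y : x <= 0 -> 0 <= y -> x * y <= 0.
Proof. intros. nra. Qed.

Section HI.
Variables (N : nat) (V : nat -> R) (m : Cx -> Cx) (Em CV etas t : R).
Hypotheses (HN : (1 <= N)%nat) (HCV : 0 < CV) (Hreg : eta_regular N V etas CV) (He : 0 < etas)
  (Ht : 0 < t) (Hts : t <= tau0 CV) (Hs1 : (16 * CV * CV + 1) * etas <= t * t)
  (Hm : is_mfc N V t m) (Hedge : is_left_edge m Em).

Definition Estar := Er N V CV t + Khic CV * t * t.
Definition m0 := t / (2 * (CV + 1)).

Lemma Estar_range : -3/4 <= Estar <= 3/4.
Proof. destruct (ref_facts N V CV etas t HN HCV Hreg He Ht Hts Hs1) as (_ & _ & _ & HEr & _).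
 destruct (t_small CV t HCV Ht Hts) as [T1 T2]. destruct (consts_pos CV HCV) as (? & ? & ? & ? & ?).
 apply abs_le_bt in HEr. unfold Estar. assert (Khic CV * t <= 1/12800) by nra.
 assert (0 <= Khic CV * t * t) by (repeat apply Rmult_le_pos; lra). nra. Qed.

Lemma Hi_sol eta : 0 < eta <= t * t / 2 -> m0 <= Im (m (mkC Estar eta)).
Proof. intros Heta. pose proof Estar_range as HEs.
 destruct (ref_facts N V CV etas t HN HCV Hreg He Ht Hts Hs1) as (Har & Hbr & HIr & HEr & HLt).
 destruct (t_small CV t HCV Ht Hts) as [T1 T2]. destruct (s_facts CV etas t HCV He Ht Hts Hs1) as (S1 & S2 & S3 & S4).
 destruct (consts_pos CV HCV) as (CP1 & CP2 & CP3 & CP4 & CP5).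
 assert (Htt : t * t <= 1) by nra.
 set (z := mkC Estar eta).
 destruct (solz N V m CV t HN HCV Ht Hts Hm z) as (Ha & Hb & HI & HM & EM & ER & EI); [unfold z; simpl; lra | unfold z; simpl; lra | ].
 set (a := Re (xi t m z)) in *. set (b := Im (xi t m z)) in *. set (M := Im (m z)) in *.
 assert (EB : b = eta + t * M) by (unfold z in EI; simpl in EI; rewrite EM; lra).
 assert (Hm0 : m0 <= t / 2).
 { unfold m0. unfold Rdiv. apply Rmult_le_compat_l. lra. apply Rinv_le_contravar; lra. }
 destruct (Rlt_le_dec (t * t) b) as [Hbig|Hsmall].
 - assert (t * M >= t * (t / 2)) by (field_simplify; lra). 
   assert (t / 2 <= M). { apply Rmult_le_reg_l with t; lra. } lra.
 - destruct (cmp_main N V t a b (ar CV t) (br t) HN Ht ltac:(lra) Hbr ltac:(lra) HIr) as (P & Q & EPQ & HP & HQ).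
   unfold z in ER. simpl in ER. rewrite <- ER in EPQ. fold (Er N V CV t) in EPQ. unfold Estar in EPQ.
   assert (Q1 : Rabs ((b - br t) * Q) <= 1/4 * (b + br t)).
   { rewrite Rabs_mult. apply Rle_trans with (Rabs (b - br t) * (1/4)). apply Rmult_le_compat_l; [apply Rabs_pos| lra].
     assert (Rabs (b - br t) <= b + br t) by (apply abs_bt_le; lra). lra. }
   apply abs_le_bt in Q1. unfold br in Q1, EPQ.
   assert (Hda : 0 < a - ar CV t).
   { destruct (Rlt_le_dec 0 (a - ar CV t)) as [|Hc]; auto. exfalso.
     assert ((a - ar CV t) * P <= 0) by (apply mul_np; lra). unfold Khic in EPQ.
     assert (0 <= Lc CV * t * t) by (repeat apply Rmult_le_pos; lra). lra. }
   assert ((a - ar CV t) * P <= 5/4 * (a - ar CV t)) by (rewrite (Rmult_comm (5/4)); apply Rmult_le_compat_l; lra).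
   assert (0 <= Lc CV * t * t) by (repeat apply Rmult_le_pos; lra).
   assert (Hat : t * t <= a) by (unfold Khic in EPQ; unfold ar in *; lra).
   assert (0 <= t * t) by nra.
   assert (Hf : sqrt etas * sqrt a + etas <= b) by (apply (floor_lem N V CV etas t); auto; lra).
   destruct (reg2 N V CV etas Hreg a b) as [R1 _]; [lra | lra | ].
   assert (t <= sqrt (a + b)) by (rewrite <- (sqrt_square t) by lra; apply sqrt_le_1_alt; lra).
   assert (/ CV * t <= M) by (rewrite EM; apply Rle_trans with (/ CV * sqrt (a + b)); [apply Rmult_le_compat_l; [left; apply Rinv_0_lt_compat; lra | lra] | lra]).
   assert (m0 <= / CV * t).
   { unfold m0. unfold Rdiv. rewrite Rmult_comm. apply Rmult_le_compat_r. lra. apply Rle_trans with (/ (CV + 1)).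
     apply Rinv_le_contravar; lra. apply Rinv_le_contravar; lra. }
   lra.
Qed.

Definition Dm := (Rabs (V 0) + 1) * (Rabs (V 0) + 1) + 121.
Definition dN := t / 2 * / INR N * ((t * m0 / Dm) * (t * m0 / Dm)).

Lemma dN_pos : 0 < dN.
Proof. unfold dN, Dm, m0. assert (0 < INR N) by (apply INR_pos; auto).
 pose proof (Rabs_pos (V 0)).
 assert (0 < t * (t / (2 * (CV + 1))) / ((Rabs (V 0) + 1) * (Rabs (V 0) + 1) + 121)).
 { apply Rdiv_lt_0_compat. apply Rmult_lt_0_compat; auto. apply Rdiv_lt_0_compat; lra. nra. }
 apply Rmult_lt_0_compat. apply Rmult_lt_0_compat. lra. apply Rinv_0_lt_compat; lra. nra. Qed.

Lemma Hi_lip eta1 eta2 : 0 < eta1 <= t * t / 2 -> 0 < eta2 <= t * t / 2 ->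
  Rabs (Im (m (mkC Estar eta1)) - Im (m (mkC Estar eta2))) <= (/ dN + 1) / t * Rabs (eta1 - eta2).
Proof. intros H1 H2. pose proof Estar_range as HEs. pose proof dN_pos as HdN.
 destruct (t_small CV t HCV Ht Hts) as [T1 T2].
 assert (Htt : t * t <= 1) by nra.
 pose proof (Hi_sol eta1 H1) as Hm1. pose proof (Hi_sol eta2 H2) as Hm2.
 set (z1 := mkC Estar eta1) in *. set (z2 := mkC Estar eta2) in *.
 destruct (solz N V m CV t HN HCV Ht Hts Hm z1) as (Ha1 & Hb1 & HI1 & HM1 & EM1 & ER1 & EI1); [unfold z1; simpl; lra | unfold z1; simpl; lra | ].
 destruct (solz N V m CV t HN HCV Ht Hts Hm z2) as (Ha2 & Hb2 & HI2 & HM2 & EM2 & ER2 & EI2); [unfold z2; simpl; lra | unfold z2; simpl; lra | ].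
 set (a1 := Re (xi t m z1)) in *. set (b1 := Im (xi t m z1)) in *. set (M1 := Im (m z1)) in *.
 set (a2 := Re (xi t m z2)) in *. set (b2 := Im (xi t m z2)) in *. set (M2 := Im (m z2)) in *.
 assert (EB1 : b1 = eta1 + t * M1) by (unfold z1 in EI1; simpl in EI1; rewrite EM1; lra).
 assert (EB2 : b2 = eta2 + t * M2) by (unfold z2 in EI2; simpl in EI2; rewrite EM2; lra).
 assert (Hm0 : 0 < m0) by (unfold m0; apply Rdiv_lt_0_compat; lra).
 assert (Hbl1 : t * m0 <= b1) by (assert (t * m0 <= t * M1) by (apply Rmult_le_compat_l; lra); lra).
 destruct (cau_main N V t a1 b1 a2 b2 HN Ht ltac:(lra) ltac:(lra) ltac:(lra) ltac:(lra)) as (P & Q & EP1 & EP2 & HP).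
 unfold z1 in ER1, EI1. unfold z2 in ER2, EI2. simpl in ER1, ER2, EI1, EI2.
 rewrite <- ER1, <- ER2 in EP1. rewrite <- EI1, <- EI2 in EP2.
 assert (HP2 : dN <= P).
 { eapply Rle_trans; [| exact HP].
   pose proof (avg_term N (fun i => (b1 / Dd (V i) a1 b1) * (b1 / Dd (V i) a1 b1)) 0 HN ltac:(intros; apply sq_nn) ltac:(lia)) as Hav.
   simpl in Hav.
   assert (HD : 0 < Dd (V 0) a1 b1) by (apply Dd_pos; lra).
   assert (HDm : Dd (V 0) a1 b1 <= Dm).
   { unfold Dd, Dm. assert (Rabs (V 0 - a1) <= Rabs (V 0) + 1).
     { eapply Rle_trans. apply Rabs_triang. rewrite Rabs_Ropp. assert (Rabs a1 <= 1) by (apply abs_bt_le; lra). lra. }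
     assert ((V 0 - a1) * (V 0 - a1) <= (Rabs (V 0) + 1) * (Rabs (V 0) + 1)).
     { apply sq_le_abs; auto. }
     nra. }
   assert (Hv : t * m0 / Dm <= b1 / Dd (V 0) a1 b1).
   { unfold Rdiv. apply Rle_trans with (b1 * / Dm). apply Rmult_le_compat_r. left; apply Rinv_0_lt_compat; lra. lra.
     apply Rmult_le_compat_l. lra. apply Rinv_le_contravar; lra. }
   assert (Hv0 : 0 <= t * m0 / Dm) by (unfold Rdiv; apply Rmult_le_pos; [nra | left; apply Rinv_0_lt_compat; lra]).
   assert (Hsq : (t * m0 / Dm) * (t * m0 / Dm) <= (b1 / Dd (V 0) a1 b1) * (b1 / Dd (V 0) a1 b1)) by (apply Rmult_le_compat; lra).
   unfold dN. rewrite Rmult_assoc. apply Rmult_le_compat_l. lra.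
   eapply Rle_trans; [| exact Hav]. apply Rmult_le_compat_l. left; apply Rinv_0_lt_compat, INR_pos; auto. exact Hsq. }
 assert (HP0 : 0 < P) by lra.
 assert (Eid : (b1 - b2) * (P * P + Q * Q) = P * (eta1 - eta2) + Q * ((a1 - a2) * P + (b1 - b2) * Q)) by (rewrite EP2; ring).
 rewrite <- EP1 in Eid. replace (Estar - Estar) with 0 in Eid by ring. rewrite Rmult_0_r, Rplus_0_r in Eid.
 assert (Eabs : Rabs (b1 - b2) * (P * P + Q * Q) = P * Rabs (eta1 - eta2)).
 { rewrite <- (Rabs_right (P * P + Q * Q)) by (pose proof (sq_nn Q); nra). rewrite <- Rabs_mult, Eid, Rabs_mult, Rabs_right by lra. reflexivity. }
 assert (Hdb : Rabs (b1 - b2) * P <= Rabs (eta1 - eta2)).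
 { apply Rmult_le_reg_r with P. lra. pose proof (sq_nn Q). pose proof (Rabs_pos (b1 - b2)).
   assert (0 <= Rabs (b1 - b2) * (Q * Q)) by (apply Rmult_le_pos; lra). nra. }
 assert (Hdb2 : Rabs (b1 - b2) <= / dN * Rabs (eta1 - eta2)).
 { apply Rmult_le_reg_l with dN. lra. rewrite <- Rmult_assoc, Rinv_r by lra. rewrite Rmult_1_l.
   pose proof (Rabs_pos (b1 - b2)). apply Rle_trans with (Rabs (b1 - b2) * P). rewrite Rmult_comm. apply Rmult_le_compat_l; lra. lra. }
 assert (EM12 : M1 - M2 = ((b1 - b2) - (eta1 - eta2)) / t) by (rewrite EB1, EB2; field; lra).
 rewrite EM12. unfold Rdiv. rewrite Rabs_mult, (Rabs_right (/ t)) by (left; apply Rinv_0_lt_compat; lra).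
 pose proof (Rabs_triang (b1 - b2) (- (eta1 - eta2))). rewrite Rabs_Ropp in H.
 assert (Rabs (b1 - b2 - (eta1 - eta2)) <= (/ dN + 1) * Rabs (eta1 - eta2)) by (unfold Rminus at 1; lra).
 replace ((/ dN + 1) * / t * Rabs (eta1 - eta2)) with ((/ dN + 1) * Rabs (eta1 - eta2) * / t) by ring.
 apply Rmult_le_compat_r. left; apply Rinv_0_lt_compat; lra. exact H0.
Qed.

Lemma Hi : density_pos m Estar.
Proof. pose proof dN_pos. destruct (t_small CV t HCV Ht Hts) as [T1 T2].
 assert (Hm0 : 0 < m0) by (unfold m0; apply Rdiv_lt_0_compat; lra).
 pose proof PI_RGT_0 as Hpi.
 destruct (lim_exists (fun eta => Im (m (mkC Estar eta)) / PI) (t * t / 2) ((/ dN + 1) / t / PI) (m0 / PI)) as [l [Hl1 Hl2]].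
 - nra.
 - unfold Rdiv. apply Rmult_le_pos. apply Rmult_le_pos. assert (0 < / dN) by (apply Rinv_0_lt_compat; lra). lra.
   left; apply Rinv_0_lt_compat; lra. left; apply Rinv_0_lt_compat; lra.
 - intros x y Hx Hy. replace (Im (m (mkC Estar x)) / PI - Im (m (mkC Estar y)) / PI) with
     ((Im (m (mkC Estar x)) - Im (m (mkC Estar y))) * / PI) by (field; lra).
   rewrite Rabs_mult, (Rabs_right (/ PI)) by (left; apply Rinv_0_lt_compat; lra).
   pose proof (Hi_lip x y Hx Hy).
   replace ((/ dN + 1) / t / PI * Rabs (x - y)) with ((/ dN + 1) / t * Rabs (x - y) * / PI) by (field; lra).
   apply Rmult_le_compat_r; [left; apply Rinv_0_lt_compat; lra | exact H0].
 - intros x Hx. unfold Rdiv. apply Rmult_le_compat_r. left; apply Rinv_0_lt_compat; lra. apply Hi_sol; lra.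
 - exists l. split. apply Rlt_le_trans with (m0 / PI); auto. apply Rdiv_lt_0_compat; lra. exact Hl2. Qed.

Lemma Em_bounds : Er N V CV t - Cloc CV * t * t <= Em <= Estar /\ -3/4 <= Em <= 3/4.
Proof. destruct Hedge as (H1 & H2 & H3). pose proof Estar_range. pose proof Hi.
 split; split.
 - apply H2. intros E HE HD. apply (Lo N V m CV etas t); auto.
 - apply H1; auto.
 - apply H2. intros E HE _. lra.
 - destruct H3 as (E & HE & HD). pose proof (H1 E HE HD). lra. Qed.
End HI.

Definition c1 (CV : R) := / (16 * (CV * CV + 1)).

Section FIN.
Variables (N : nat) (V : nat -> R) (m : Cx -> Cx) (Em CV etas t : R).
Hypotheses (HN : (1 <= N)%nat) (HCV : 0 < CV) (Hreg : eta_regular N V etas CV) (He : 0 < etas)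
  (Ht : 0 < t) (Hts : t <= tau0 CV) (Hs4 : (16 * CV * CV + 4) * etas <= t * t)
  (Hm : is_mfc N V t m) (Hedge : is_left_edge m Em).

Lemma Hs1 : (16 * CV * CV + 1) * etas <= t * t.
Proof. lra. Qed.

Lemma part1_core a b i : (i < N)%nat -> -4/5 <= a <= 4/5 -> 0 < b -> t * I2 N V a b < 1 ->
  / (8 * (CV * CV + 1)) * (t * t) <= sqrt (Dd (V i) a b).
Proof. intros Hi Ha Hb HI.
 destruct (t_small CV t HCV Ht Hts) as [T1 T2]. destruct (s_facts CV etas t HCV He Ht Hts Hs1) as (S1 & S2 & S3 & S4).
 assert (Htt : 0 < t * t) by nra. assert (Htt1 : t * t <= 1/100) by nra.
 assert (HC : 0 < CV * CV + 1) by (pose proof (sq_nn CV); lra).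
 set (c' := / (8 * (CV * CV + 1))). assert (Hc' : 0 < c' <= 1/8).
 { unfold c'. split. apply Rinv_0_lt_compat; lra. replace (1/8) with (/8) by field. pose proof (sq_nn CV). apply Rinv_le_contravar; lra. }
 set (D := Dd (V i) a b). assert (HD : 0 < D) by (apply Dd_pos; lra).
 set (d := sqrt D). assert (Hd : 0 < d) by (apply sqrt_lt_R0; lra). assert (Hdd : d * d = D) by (apply sqrt_sqrt; lra).
 destruct (Rle_lt_dec (c' * (t * t)) d) as [|Hcon]; auto. exfalso.
 assert (Hdsm : d < 1/100) by nra.
 destruct Hreg as (_ & _ & Hno & _). specialize (Hno i Hi).
 destruct (Rlt_le_dec 1 (Rabs (V i))) as [Hfar|Hnear].
 - assert (Rabs (V i - a) >= 1/5).
   { pose proof (Rabs_triang_inv (V i) a). assert (Rabs a <= 4/5) by (apply abs_bt_le; lra). lra. }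
   assert ((V i - a) * (V i - a) >= 1/25).
   { assert (Rabs (V i - a) * Rabs (V i - a) = (V i - a) * (V i - a)) by (rewrite <- Rabs_mult; apply Rabs_right, Rle_ge, sq_nn). nra. }
   assert (D >= 1/25) by (unfold D, Dd; pose proof (sq_nn b); lra). nra.
 - apply abs_le_bt in Hnear. destruct (Rle_lt_dec 0 (V i)) as [Hpos|Hneg].
   +
     assert (Hcmp : I2 N V (V i) d <= 2 * I2 N V a b).
     { apply (I2_cmp N V HN); auto. unfold D, Dd in Hdd. lra. }
     assert (Hfl : sqrt etas * sqrt (V i) + etas <= d).
     { assert (F1 : 4 * CV * CV * etas <= t / 2 * (t / 2)) by lra.
       assert (F2 : etas <= t / 2 * (t / 2)) by (pose proof (sq_nn CV); assert (0 <= CV*CV*etas) by (apply Rmult_le_pos; lra); lra).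
       assert (F3 : t / 2 * I2 N V (V i) d < 1) by (assert (0 <= I2 N V (V i) d) by (apply I2_pos; auto); nra).
       apply (floor_lem N V CV etas (t/2) HN HCV Hreg He ltac:(lra) ltac:(lra) F1 F2); auto; lra. }
     destruct (reg2 N V CV etas Hreg (V i) d) as [R1 _]; [lra | lra | ].
     rewrite FF_I2 in R1.
     assert (sqrt d <= sqrt (V i + d)) by (apply sqrt_le_1_alt; lra).
     set (s := sqrt d) in *. assert (Hs : 0 < s) by (apply sqrt_lt_R0; lra). assert (Hss : s * s = d) by (apply sqrt_sqrt; lra).
     assert (HI0 : 0 <= I2 N V (V i) d) by (apply I2_pos; auto).
     assert (t * I2 N V (V i) d < 2) by (assert (t * I2 N V (V i) d <= t * (2 * I2 N V a b)) by (apply Rmult_le_compat_l; lra); lra).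
     assert (t * (d * I2 N V (V i) d) < 2 * d) by (replace (t * (d * I2 N V (V i) d)) with (d * (t * I2 N V (V i) d)) by ring; nra).
     assert (t * (/ CV * s) < 2 * d).
     { apply Rle_lt_trans with (t * (d * I2 N V (V i) d)); auto. apply Rmult_le_compat_l. lra.
       apply Rle_trans with (/ CV * sqrt (V i + d)); auto. apply Rmult_le_compat_l. left; apply Rinv_0_lt_compat; lra. lra. }
     assert (t < 2 * CV * s).
     { apply Rmult_lt_reg_r with (/ CV * s). apply Rmult_lt_0_compat; [apply Rinv_0_lt_compat|]; lra.
       replace (2 * CV * s * (/ CV * s)) with (2 * (s * s)) by (field; lra). lra. }
     assert (t * t < 4 * CV * CV * d) by nra.
     assert (c' * (t * t) * (8 * (CV * CV + 1)) = t * t) by (unfold c'; field; lra).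
     nra.
   +
     assert (Hvi : - etas < V i) by (destruct (Rle_lt_dec (V i) (- etas)); [exfalso; apply Hno; lra | lra]).
     set (r := Rmax d etas). assert (Hr1 : d <= r) by apply Rmax_l. assert (Hr2 : etas <= r) by apply Rmax_r.
     assert (Hr3 : r <= 10) by (unfold r; apply Rmax_lub; lra).
     assert (Hcmp : I2 N V (V i) r <= 2 * I2 N V a b).
     { apply (I2_cmp N V HN); auto. lra. unfold D, Dd in Hdd. nra. }
     destruct (reg1 N V CV etas Hreg (V i) r) as [R1 _]; [lra | lra | ].
     rewrite FF_I2 in R1.
     assert (Habs : Rabs (V i) <= etas) by (apply abs_bt_le; lra).
     set (s := sqrt (2 * r)). assert (Hs : 0 < s) by (apply sqrt_lt_R0; lra). assert (Hss : s * s = 2 * r) by (apply sqrt_sqrt; lra).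
     assert (sqrt (Rabs (V i) + r) <= s) by (apply sqrt_le_1_alt; lra).
     assert (0 < sqrt (Rabs (V i) + r)) by (apply sqrt_lt_R0; pose proof (Rabs_pos (V i)); lra).
     assert (r / s <= r / sqrt (Rabs (V i) + r)).
     { unfold Rdiv. apply Rmult_le_compat_l. lra. apply Rinv_le_contravar; lra. }
     assert (HI0 : 0 <= I2 N V (V i) r) by (apply I2_pos; auto; lra).
     assert (/ CV * (r / s) <= r * I2 N V (V i) r).
     { apply Rle_trans with (/ CV * (r / sqrt (Rabs (V i) + r))); auto. apply Rmult_le_compat_l. left; apply Rinv_0_lt_compat; lra. lra. }
     assert (t * I2 N V (V i) r < 2) by (assert (t * I2 N V (V i) r <= t * (2 * I2 N V a b)) by (apply Rmult_le_compat_l; lra); lra).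
     assert (t * (r * I2 N V (V i) r) < 2 * r) by (replace (t * (r * I2 N V (V i) r)) with (r * (t * I2 N V (V i) r)) by ring; nra).
     assert (Hk : t * (/ CV * (r / s)) < 2 * r).
     { apply Rle_lt_trans with (t * (r * I2 N V (V i) r)); auto. apply Rmult_le_compat_l; lra. }
     assert (t < 2 * CV * s).
     { replace (t * (/ CV * (r / s))) with (t * r / (CV * s)) in Hk by (field; lra).
       apply Rmult_lt_reg_r with (r / (CV * s)). apply Rdiv_lt_0_compat; nra.
       replace (2 * CV * s * (r / (CV * s))) with (2 * r) by (field; lra). unfold Rdiv in *. lra. }
     assert (t * t < 8 * CV * CV * r) by nra.
     assert (c' * (t * t) * (8 * (CV * CV + 1)) = t * t) by (unfold c'; field; lra).
     destruct (Rle_lt_dec d etas) as [Hde|Hde].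
     * assert (r = etas) by (unfold r; apply Rmax_right; lra). nra.
     * assert (r = d) by (unfold r; apply Rmax_left; lra). nra.
Qed.
End FIN.

Lemma sqrt_lin K x : 0 <= K -> 0 <= x -> sqrt (K * x * x) <= (K + 1) * x.
Proof. intros. rewrite <- (sqrt_square ((K+1)*x)) by nra. apply sqrt_le_1_alt. nra. Qed.

Lemma sqrt_scale c X : 1 <= c -> 0 <= X -> sqrt (c * X) <= c * sqrt X.
Proof. intros. rewrite sqrt_mult by lra. apply Rmult_le_compat_r. apply sqrt_pos.
 rewrite <- (sqrt_square c) at 2 by lra. apply sqrt_le_1_alt. nra. Qed.

Definition K2c CV := 2 * Lc CV + 1 + Cloc CV + Khic CV.
Definition K4c CV := Lc CV + 2 * Cloc CV + 3.
Definition K5c CV := 2 * Lc CV + 2 * Cloc CV + Khic CV + 1.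
Definition K3c CV := (K2c CV + 2 + 8 * CV) + (K5c CV + 4) + 4 * CV * (K4c CV + 2) * (K5c CV + 2).

Definition K7c CV := 2 * Cloc CV + 2 * Khic CV + 1.
Definition K6c CV := 2 * ((CV + 1) * (K7c CV + 2) + 4 * (CV + 1) * (CV + 1) + 4 * (CV + 1)).

Lemma sqrt_add3 x y w : 0 <= x -> 0 <= y -> 0 <= w -> sqrt (x + y + w) <= sqrt x + sqrt y + sqrt w.
Proof. intros. eapply Rle_trans. apply sqrt_add_le; lra. pose proof (sqrt_add_le x y H H0). lra. Qed.

Section FIN2.
Variables (N : nat) (V : nat -> R) (m : Cx -> Cx) (Em CV etas t : R).
Hypotheses (HN : (1 <= N)%nat) (HCV : 0 < CV) (Hreg : eta_regular N V etas CV) (He : 0 < etas)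
  (Ht : 0 < t) (Hts : t <= tau0 CV) (Hs4 : (16 * CV * CV + 4) * etas <= t * t)
  (Hm : is_mfc N V t m) (Hedge : is_left_edge m Em).

Let Hs1' := Hs1 CV etas t He Hs4.

Lemma zcmp z : 0 < Im z <= 10 -> -3/4 <= Re z <= 3/4 ->
  exists P Q, Re z - Er N V CV t = (Re (xi t m z) - ar CV t) * P + (Im (xi t m z) - t * t) * Q /\
   3/4 <= P <= 5/4 /\ Rabs ((Im (xi t m z) - t * t) * Q) <= (Im (xi t m z) + t * t) / 4.
Proof. intros Hz1 Hz2.
 destruct (ref_facts N V CV etas t HN HCV Hreg He Ht Hts Hs1') as (Har & Hbr & HIr & HEr & HLt).
 destruct (solz N V m CV t HN HCV Ht Hts Hm z Hz1 Hz2) as (Ha & Hb & HI & HM & EM & ER & EI).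
 destruct (cmp_main N V t (Re (xi t m z)) (Im (xi t m z)) (ar CV t) (br t) HN Ht ltac:(lra) Hbr ltac:(lra) HIr) as (P & Q & EPQ & HP & HQ).
 rewrite <- ER in EPQ. exists P, Q. unfold br in *. split. exact EPQ. split. exact HP.
 rewrite Rabs_mult. apply Rle_trans with (Rabs (Im (xi t m z) - t * t) * (1/4)). apply Rmult_le_compat_l; [apply Rabs_pos| lra].
 assert (0 <= t * t) by nra.
 assert (Rabs (Im (xi t m z) - t * t) <= Im (xi t m z) + t * t) by (apply abs_bt_le; lra). lra. Qed.

Lemma part3 z : 0 < Im z <= 10 -> -3/4 <= Re z <= 3/4 -> Re z >= Em - t * t ->
  t + sqrt (Rabs (Re z - Em) + Im z) <= K3c CV * (t + Im (m z)).
Proof. intros Hz1 Hz2 Hz3.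
 destruct (ref_facts N V CV etas t HN HCV Hreg He Ht Hts Hs1') as (Har & Hbr & HIr & HEr & HLt).
 destruct (t_small CV t HCV Ht Hts) as [T1 T2]. destruct (s_facts CV etas t HCV He Ht Hts Hs1') as (S1 & S2 & S3 & S4).
 destruct (consts_pos CV HCV) as (CP1 & CP2 & CP3 & CP4 & CP5).
 destruct (Em_bounds N V m Em CV etas t HN HCV Hreg He Ht Hts Hs1' Hm Hedge) as [[Em1 Em2] _].
 unfold Estar in Em2.
 destruct (solz N V m CV t HN HCV Ht Hts Hm z Hz1 Hz2) as (Ha & Hb & HI & HM & EM & ER & EI).
 destruct (zcmp z Hz1 Hz2) as (P & Q & EPQ & HP & HQ).
 set (a := Re (xi t m z)) in *. set (b := Im (xi t m z)) in *. set (M := Im (m z)) in *.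
 set (E := Re z) in *. set (eta := Im z) in *.
 assert (EB : b = eta + t * M) by (rewrite EI, EM; ring).
 assert (Hetab : eta <= b) by (assert (0 < t * M) by (apply Rmult_lt_0_compat; lra); lra).
 set (Er0 := Er N V CV t) in *. unfold ar in *.
 set (L := Lc CV) in *. set (Clo := Cloc CV) in *. set (Khi := Khic CV) in *.
 set (tt := t * t) in *. assert (Htt : 0 < tt) by (unfold tt; nra).
 assert (HL0 : 0 <= L * tt) by (apply Rmult_le_pos; lra).
 assert (HClo0 : 0 <= Clo * tt) by (apply Rmult_le_pos; lra).
 assert (HKhi0 : 0 <= Khi * tt) by (apply Rmult_le_pos; lra).
 replace (- L * t * t) with (- (L * tt)) in * by (unfold tt; ring).
 replace (Clo * t * t) with (Clo * tt) in * by (unfold tt; ring).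
 replace (Khi * t * t) with (Khi * tt) in * by (unfold tt; ring).
 apply abs_le_bt in HQ.
 assert (HK3 : forall X Y, 0 <= X -> 0 <= Y -> X <= K3c CV * t /\ Y <= K3c CV * M -> X + Y <= K3c CV * (t + M)) by (intros; lra).
 assert (Hsq0 : 0 <= sqrt (Rabs (E - Em) + eta)) by apply sqrt_pos.
 assert (HCVp : 0 <= CV) by lra.
 assert (Hkpos : 0 <= K2c CV /\ 0 <= K4c CV /\ 0 <= K5c CV) by (unfold K2c, K4c, K5c; fold L Clo Khi; repeat split; lra).
 destruct Hkpos as (HK2 & HK4 & HK5).
 destruct (Rle_lt_dec 0 a) as [Hapos|Haneg].
 -
   pose proof (M_lower_pos N V CV etas t HN HCV Hreg He Ht S4 S1 S2 a b ltac:(lra) ltac:(lra) HI) as ML.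
   rewrite <- EM in ML.
   assert (HPa : 0 <= (a + L * tt) * P <= 5/4 * (a + L * tt)) by (split; [apply Rmult_le_pos; lra | rewrite (Rmult_comm (5/4)); apply Rmult_le_compat_l; lra]).
   replace (a - - (L * tt)) with (a + L * tt) in EPQ by ring.
   assert (Hk : Rabs (E - Em) + eta <= 2 * (a + b) + K2c CV * tt).
   { assert (Rabs (E - Em) <= Rabs (E - Er0) + Rabs (Er0 - Em)).
     { replace (E - Em) with ((E - Er0) + (Er0 - Em)) by ring. apply Rabs_triang. }
     assert (Rabs (E - Er0) <= 5/4 * (a + L * tt) + (b + tt) / 4) by (apply abs_bt_le; lra).
     assert (Rabs (Er0 - Em) <= (Clo + Khi) * tt) by (apply abs_bt_le; lra).
     unfold K2c. fold L Clo Khi. lra. }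
   assert (H1 : sqrt (Rabs (E - Em) + eta) <= sqrt (2 * (a + b)) + sqrt (K2c CV * t * t)).
   { eapply Rle_trans. apply sqrt_le_1_alt. apply Hk. replace (K2c CV * tt) with (K2c CV * t * t) by (unfold tt; ring).
     apply sqrt_add_le. lra. apply Rmult_le_pos; [apply Rmult_le_pos|]; lra. }
   pose proof (sqrt_scale 2 (a + b) ltac:(lra) ltac:(lra)).
   pose proof (sqrt_lin (K2c CV) t HK2 ltac:(lra)).
   assert (sqrt (a + b) <= 4 * CV * M).
   { apply Rmult_le_reg_l with (/ (4 * CV)). apply Rinv_0_lt_compat; lra.
     replace (/ (4 * CV) * (4 * CV * M)) with M by (field; lra). lra. }
   assert (HK3a : K2c CV + 2 + 8 * CV <= K3c CV).
   { unfold K3c. assert (0 <= 4 * CV * (K4c CV + 2) * (K5c CV + 2)) by (repeat apply Rmult_le_pos; lra). lra. }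
   assert (t + sqrt (Rabs (E - Em) + eta) <= (K2c CV + 2) * t + 8 * CV * M) by nra.
   assert ((K2c CV + 2) * t + 8 * CV * M <= K3c CV * (t + M)).
   { assert (8 * CV * M <= K3c CV * M) by (apply Rmult_le_compat_r; lra).
     assert ((K2c CV + 2) * t <= K3c CV * t) by (apply Rmult_le_compat_r; lra). lra. }
   lra.
 -
   replace (a - - (L * tt)) with (a + L * tt) in EPQ by ring.
   assert (HEr2 : Rabs (E - Er0) <= (2 * L + Clo + 1) * tt + b /\ - a <= K4c CV * tt + b).
   { destruct (Rle_lt_dec 0 (a + L * tt)) as [Hda|Hda].
     - assert (0 <= (a + L * tt) * P <= 5/4 * (a + L * tt)) by (split; [apply Rmult_le_pos; lra | rewrite (Rmult_comm (5/4)); apply Rmult_le_compat_l; lra]).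
       split. apply abs_bt_le. lra. unfold K4c. fold L Clo. lra.
     - assert ((a + L * tt) * P <= 3/4 * (a + L * tt)) by (rewrite (Rmult_comm (3/4)); apply Rmult_le_compat_neg_l; lra).
       assert (E - Er0 >= - (Clo + 1) * tt) by lra.
       split. apply abs_bt_le. split; lra. unfold K4c. fold L Clo. lra. }
   destruct HEr2 as [HEr2 Ha2].
   assert (Hk : Rabs (E - Em) + eta <= K5c CV * tt + 2 * b).
   { assert (Rabs (E - Em) <= Rabs (E - Er0) + Rabs (Er0 - Em)).
     { replace (E - Em) with ((E - Er0) + (Er0 - Em)) by ring. apply Rabs_triang. }
     assert (Rabs (Er0 - Em) <= (Clo + Khi) * tt) by (apply abs_bt_le; lra).
     unfold K5c. fold L Clo Khi. lra. }
   assert (HK3b : K5c CV + 4 <= K3c CV).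
   { unfold K3c. assert (0 <= 4 * CV * (K4c CV + 2) * (K5c CV + 2)) by (repeat apply Rmult_le_pos; lra). lra. }
   assert (HK3c : 4 * CV * (K4c CV + 2) * (K5c CV + 2) <= K3c CV) by (unfold K3c; lra).
   destruct (Rlt_le_dec b tt) as [Hbs|Hbl].
   + assert (sqrt (Rabs (E - Em) + eta) <= (K5c CV + 3) * t).
     { eapply Rle_trans. apply sqrt_le_1_alt. apply Rle_trans with ((K5c CV + 2) * t * t). unfold tt in *. lra. apply Rle_refl.
       replace (K5c CV + 3) with ((K5c CV + 2) + 1) by ring. apply sqrt_lin; lra. }
     assert (0 <= K3c CV * M) by (apply Rmult_le_pos; lra).
     assert ((K5c CV + 4) * t <= K3c CV * t) by (apply Rmult_le_compat_r; lra). lra.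
   + pose proof (M_lower_neg N V CV etas t HN HCV Hreg He Ht S4 S2 a b ltac:(lra) ltac:(unfold tt in *; lra)) as ML.
     rewrite <- EM in ML. rewrite Rabs_left in ML by lra.
     assert (Hsb : 0 < sqrt b) by (apply sqrt_lt_R0; lra). assert (Hsbb : sqrt b * sqrt b = b) by (apply sqrt_sqrt; lra).
     assert (Hq : sqrt (- a + b) <= (K4c CV + 2) * sqrt b).
     { eapply Rle_trans. apply sqrt_le_1_alt. apply Rle_trans with ((K4c CV + 2) * b). nra. apply Rle_refl. apply sqrt_scale; lra. }
     assert (Hq0 : 0 < sqrt (- a + b)) by (apply sqrt_lt_R0; lra).
     assert (b / sqrt (- a + b) >= sqrt b / (K4c CV + 2)).
     { apply Rle_ge. unfold Rdiv. rewrite <- Hsbb at 2. apply Rle_trans with (sqrt b * sqrt b * / ((K4c CV + 2) * sqrt b)).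
       right. field. lra. apply Rmult_le_compat_l. nra. apply Rinv_le_contravar; lra. }
     assert (Hsbm : sqrt b <= 4 * CV * (K4c CV + 2) * M).
     { assert (/ (4 * CV) * (sqrt b / (K4c CV + 2)) <= M).
       { apply Rle_trans with (/ (4 * CV) * (b / sqrt (- a + b))); auto. apply Rmult_le_compat_l. left; apply Rinv_0_lt_compat; lra. lra. }
       apply Rmult_le_reg_l with (/ (4 * CV) * / (K4c CV + 2)). apply Rmult_lt_0_compat; apply Rinv_0_lt_compat; lra.
       replace (/ (4 * CV) * / (K4c CV + 2) * (4 * CV * (K4c CV + 2) * M)) with M by (field; lra).
       replace (/ (4 * CV) * / (K4c CV + 2) * sqrt b) with (/ (4 * CV) * (sqrt b / (K4c CV + 2))) by (field; lra). lra. }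
     assert (sqrt (Rabs (E - Em) + eta) <= (K5c CV + 2) * sqrt b).
     { eapply Rle_trans. apply sqrt_le_1_alt. apply Rle_trans with ((K5c CV + 2) * b). nra. apply Rle_refl. apply sqrt_scale; lra. }
     assert ((K5c CV + 2) * sqrt b <= (K5c CV + 2) * (4 * CV * (K4c CV + 2) * M)) by (apply Rmult_le_compat_l; lra).
     assert ((K5c CV + 2) * (4 * CV * (K4c CV + 2) * M) = 4 * CV * (K4c CV + 2) * (K5c CV + 2) * M) by ring.
     assert (4 * CV * (K4c CV + 2) * (K5c CV + 2) * M <= K3c CV * M) by (apply Rmult_le_compat_r; lra).
     assert (0 <= K3c CV) by lra.
     assert (t <= K3c CV * t) by (assert (1 <= K3c CV) by lra; nra). lra.
Qed.

Lemma part2M z : 0 < Im z <= 10 -> -3/4 <= Re z <= 3/4 ->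
  Im (m z) <= K6c CV * (t + sqrt (Rabs (Re z - Em) + Im z)).
Proof. intros Hz1 Hz2.
 destruct (ref_facts N V CV etas t HN HCV Hreg He Ht Hts Hs1') as (Har & Hbr & HIr & HEr & HLt).
 destruct (t_small CV t HCV Ht Hts) as [T1 T2]. destruct (s_facts CV etas t HCV He Ht Hts Hs1') as (S1 & S2 & S3 & S4).
 destruct (consts_pos CV HCV) as (CP1 & CP2 & CP3 & CP4 & CP5).
 destruct (Em_bounds N V m Em CV etas t HN HCV Hreg He Ht Hts Hs1' Hm Hedge) as [[Em1 Em2] _].
 unfold Estar in Em2.
 destruct (solz N V m CV t HN HCV Ht Hts Hm z Hz1 Hz2) as (Ha & Hb & HI & HM & EM & ER & EI).
 destruct (zcmp z Hz1 Hz2) as (P & Q & EPQ & HP & HQ).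
 pose proof (M_upper N V CV etas t HN HCV Hreg He Ht S4 S1 S2 (Re (xi t m z)) (Im (xi t m z)) ltac:(lra) ltac:(lra) HI) as MU.
 set (a := Re (xi t m z)) in *. set (b := Im (xi t m z)) in *. set (M := Im (m z)) in *.
 set (E := Re z) in *. set (eta := Im z) in *. rewrite <- EM in MU.
 assert (EB : b = eta + t * M) by (rewrite EI, EM; ring).
 set (Er0 := Er N V CV t) in *. unfold ar in *.
 set (L := Lc CV) in *. set (Clo := Cloc CV) in *. set (Khi := Khic CV) in *.
 set (tt := t * t) in *. assert (Htt : 0 < tt) by (unfold tt; nra).
 assert (HL0 : 0 <= L * tt) by (apply Rmult_le_pos; lra).
 assert (HClo0 : 0 <= Clo * tt) by (apply Rmult_le_pos; lra).
 assert (HKhi0 : 0 <= Khi * tt) by (apply Rmult_le_pos; lra).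
 replace (- L * t * t) with (- (L * tt)) in * by (unfold tt; ring).
 replace (Clo * t * t) with (Clo * tt) in * by (unfold tt; ring).
 replace (Khi * t * t) with (Khi * tt) in * by (unfold tt; ring).
 replace (a - - (L * tt)) with (a + L * tt) in EPQ by ring.
 apply abs_le_bt in HQ.
 set (k := Rabs (E - Em)). assert (Hk0 : 0 <= k) by apply Rabs_pos.
 assert (HK7 : 0 <= K7c CV) by (unfold K7c; fold Clo Khi; lra).
 set (A := Rmax a 0) in *. assert (HA0 : 0 <= A) by apply Rmax_r.
 assert (HA : A <= 2 * k + K7c CV * tt + b).
 { unfold A. apply Rmax_lub; [| unfold K7c; fold Clo Khi; lra].
   destruct (Rle_lt_dec a 0). unfold K7c; fold Clo Khi; lra.
   assert ((a + L * tt) * P >= 3/4 * (a + L * tt)) by (apply Rle_ge; rewrite (Rmult_comm (3/4)); apply Rmult_le_compat_l; lra).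
   assert (E - Er0 <= k + (Clo + Khi) * tt) by (unfold k; pose proof (Rle_abs (E - Em)); lra).
   unfold K7c; fold Clo Khi. lra. }
 assert (HsA : sqrt A <= 2 * sqrt k + (K7c CV + 1) * t + sqrt b).
 { eapply Rle_trans. apply sqrt_le_1_alt. apply HA.
   eapply Rle_trans. apply sqrt_add3; try lra. apply Rmult_le_pos; lra.
   pose proof (sqrt_scale 2 k ltac:(lra) Hk0). pose proof (sqrt_lin (K7c CV) t HK7 ltac:(lra)).
   replace (K7c CV * tt) with (K7c CV * t * t) by (unfold tt; ring). lra. }
 set (CU := CV + 1) in *. assert (HCU : 0 < CU) by (unfold CU; lra).
 assert (Hsb : sqrt b <= sqrt eta + sqrt t * sqrt M).
 { rewrite EB. rewrite <- sqrt_mult by lra. apply sqrt_add_le; nra. }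
 assert (Ham : 2 * CU * (sqrt t * sqrt M) <= 4 * CU * CU * t + M / 4).
 { pose proof (amgm2 (sqrt t) (sqrt M) (4 * CU) ltac:(lra)).
   rewrite !Rmult_assoc, sqrt_sqrt in H by lra. rewrite sqrt_sqrt in H by lra.
   replace (2 * CU * (sqrt t * sqrt M)) with (CU * (2 * (sqrt t * sqrt M))) by ring.
   apply Rle_trans with (CU * (4 * (CU * t) + / (4 * CU) * M)). apply Rmult_le_compat_l; lra.
   right. field. lra. }
 assert (Hske : sqrt k <= sqrt (k + eta)) by (apply sqrt_le_1_alt; lra).
 assert (Hsee : sqrt eta <= sqrt (k + eta)) by (apply sqrt_le_1_alt; lra).
 pose proof (sqrt_pos k). pose proof (sqrt_pos eta). pose proof (sqrt_pos b).
 assert (HM2 : M <= CU * ((K7c CV + 2) * t + 2 * sqrt k) + 2 * CU * (sqrt eta + sqrt t * sqrt M)).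
 { apply Rle_trans with (CU * (t + (2 * sqrt k + (K7c CV + 1) * t + sqrt b) + sqrt b)). 
   eapply Rle_trans. apply MU. apply Rmult_le_compat_l; lra.
   assert (CU * sqrt b <= CU * (sqrt eta + sqrt t * sqrt M)) by (apply Rmult_le_compat_l; lra). lra. }
 assert (0 <= CU * sqrt k) by (apply Rmult_le_pos; lra).
 assert (CU * sqrt k <= CU * sqrt (k + eta)) by (apply Rmult_le_compat_l; lra).
 assert (CU * sqrt eta <= CU * sqrt (k + eta)) by (apply Rmult_le_compat_l; lra).
 unfold K6c. fold CU. pose proof (sqrt_pos (k + eta)).
 assert (0 <= CU * CU * t) by (repeat apply Rmult_le_pos; lra).
 assert (0 <= CU * (K7c CV + 2) * t) by (repeat apply Rmult_le_pos; lra).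
 assert (0 <= CU * t) by (apply Rmult_le_pos; lra).
 assert (0 <= CU * (K7c CV + 2) * sqrt (k + eta)) by (repeat apply Rmult_le_pos; lra).
 assert (0 <= CU * CU * sqrt (k + eta)) by (repeat apply Rmult_le_pos; lra).
 lra. Qed.

Lemma Cabs_Dd v w : Cabs (Csub (RtoC v) w) = sqrt (Dd v (Re w) (Im w)).
Proof. unfold Cabs, Cnorm2, Csub, RtoC, Dd. simpl. f_equal. ring. Qed.

Lemma part1_full z i : 0 < Im z <= 10 -> -3/4 <= Re z <= 3/4 -> (i < N)%nat ->
  c1 CV * (t * t + Im (xi t m z)) <= sqrt (Dd (V i) (Re (xi t m z)) (Im (xi t m z))).
Proof. intros Hz1 Hz2 Hi.
 destruct (solz N V m CV t HN HCV Ht Hts Hm z Hz1 Hz2) as (Ha & Hb & HI & HM & EM & ER & EI).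
 pose proof (part1_core N V CV etas t HN HCV Hreg He Ht Hts Hs4 (Re (xi t m z)) (Im (xi t m z)) i Hi Ha ltac:(lra) HI) as P1.
 set (a := Re (xi t m z)) in *. set (b := Im (xi t m z)) in *.
 assert (Hbd : b <= sqrt (Dd (V i) a b)).
 { apply Rle_trans with (sqrt (b * b)). rewrite sqrt_square; lra. apply sqrt_le_1_alt. unfold Dd. pose proof (sq_nn (V i - a)). lra. }
 assert (HC : 0 < CV * CV + 1) by (pose proof (sq_nn CV); lra).
 set (c' := / (8 * (CV * CV + 1))) in *.
 assert (Hc' : 0 < c' <= 1) by (unfold c'; split; [apply Rinv_0_lt_compat; lra| replace 1 with (/1) by field; pose proof (sq_nn CV); apply Rinv_le_contravar; lra]).
 assert (c1 CV = c' / 2) by (unfold c1, c'; field; lra). rewrite H.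
 assert (c' * b <= b) by nra. lra. Qed.

Lemma Rpower_inv_le d rho q : 0 < rho <= d -> 0 <= q -> / Rpower d (2 + q) <= / (d * d) * / Rpower rho q.
Proof. intros Hd Hq. rewrite Rpower_plus. replace 2 with (1 + 1) by ring. rewrite Rpower_plus, Rpower_1 by lra.
 pose proof (Rle_Rpower_l rho d q Hq Hd). assert (0 < Rpower rho q) by (unfold Rpower; apply exp_pos).
 rewrite <- Rinv_mult. apply Rinv_le_contravar. apply Rmult_lt_0_compat; nra.
 apply Rmult_le_compat_l; nra. Qed.

Lemma momentz z p : 0 < Im z <= 10 -> -3/4 <= Re z <= 3/4 -> 2 <= p ->
  moment N V (xi t m z) p <=
  2 * (K6c CV + 1) / Rpower (c1 CV) (p - 2) * (t + sqrt (Rabs (Re z - Em) + Im z)) / Rpower (t * t + Im (xi t m z)) (p - 1).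
Proof. intros Hz1 Hz2 Hp.
 pose proof (part2M z Hz1 Hz2) as P2.
 destruct (solz N V m CV t HN HCV Ht Hts Hm z Hz1 Hz2) as (Ha & Hb & HI & HM & EM & ER & EI).
 set (a := Re (xi t m z)) in *. set (b := Im (xi t m z)) in *. set (M := Im (m z)) in *.
 set (sq := sqrt (Rabs (Re z - Em) + Im z)) in *. assert (Hsq : 0 <= sq) by apply sqrt_pos.
 assert (Htt : 0 < t * t) by nra.
 assert (Hc1 : 0 < c1 CV) by (unfold c1; apply Rinv_0_lt_compat; pose proof (sq_nn CV); lra).
 set (rho := c1 CV * (t * t + b)). assert (Hrho : 0 < rho) by (unfold rho; nra).
 set (X := / Rpower rho (p - 2)). assert (HX : 0 < X) by (unfold X; apply Rinv_0_lt_compat; unfold Rpower; apply exp_pos).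
 assert (Hm1 : moment N V (xi t m z) p <= I2 N V a b * X).
 { unfold moment. fold (avg N (fun i => / Rpower (Cabs (Csub (RtoC (V i)) (xi t m z))) p)).
   unfold I2. rewrite Rmult_comm, <- avg_scal. apply avg_le; auto. intros i Hi. rewrite Cabs_Dd. fold a b.
   pose proof (part1_full z i Hz1 Hz2 Hi) as P1. fold a b rho in P1.
   pose proof (Rpower_inv_le (sqrt (Dd (V i) a b)) rho (p - 2) ltac:(lra) ltac:(lra)) as R.
   replace (2 + (p - 2)) with p in R by ring. rewrite sqrt_sqrt in R by (left; apply Dd_pos; lra).
   fold X in R. lra. }
 assert (HI2 : I2 N V a b <= 2 * (K6c CV + 1) * (t + sq) / (t * t + b)).
 { assert (HK6 : 0 <= K6c CV).
   { unfold K6c, K7c. destruct (consts_pos CV HCV) as (? & ? & ? & ? & ?). pose proof (sq_nn (CV+1)).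
     assert (0 <= (CV + 1) * (2 * Cloc CV + 2 * Khic CV + 1 + 2)) by (apply Rmult_le_pos; lra). lra. }
   apply Rmult_le_reg_r with (t * t + b). lra. unfold Rdiv. rewrite Rmult_assoc, Rinv_l, Rmult_1_r by lra.
   rewrite FF_I2 in EM. fold M in EM.
   destruct (Rle_lt_dec (t * t) b).
   + (* I * (tt + b) <= 2 I b = 2M *)
     assert (0 <= I2 N V a b) by (apply I2_pos; auto; lra).
     assert (I2 N V a b * (t * t + b) <= 2 * M) by (rewrite EM; nra).
     assert (M <= (K6c CV + 1) * (t + sq)) by (assert (0 <= t + sq) by lra; nra). lra.
   + assert (I2 N V a b * t < 1) by lra. assert (0 <= I2 N V a b) by (apply I2_pos; auto; lra).
     assert (I2 N V a b * (t * t + b) <= 2 * t).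
     { assert (I2 N V a b * b <= I2 N V a b * (t * t)) by (apply Rmult_le_compat_l; lra).
       assert (I2 N V a b * (t * t) <= t) by (replace (I2 N V a b * (t * t)) with ((I2 N V a b * t) * t) by ring; nra). nra. }
     assert (2 * t <= 2 * (K6c CV + 1) * (t + sq)) by nra. lra. }
 assert (ERp : Rpower rho (p - 2) = Rpower (c1 CV) (p - 2) * Rpower (t * t + b) (p - 2)) by (unfold rho; rewrite Rpower_mult_distr; auto; lra).
 assert (ERq : Rpower (t * t + b) (p - 1) = Rpower (t * t + b) (p - 2) * (t * t + b)).
 { replace (p - 1) with ((p - 2) + 1) by ring. rewrite Rpower_plus, Rpower_1 by lra. reflexivity. }
 assert (HP1 : 0 < Rpower (c1 CV) (p - 2)) by (unfold Rpower; apply exp_pos).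
 assert (HP2 : 0 < Rpower (t * t + b) (p - 2)) by (unfold Rpower; apply exp_pos).
 eapply Rle_trans. apply Hm1. unfold X. rewrite ERp, ERq.
 eapply Rle_trans. apply Rmult_le_compat_r. left; apply Rinv_0_lt_compat; nra. apply HI2.
 right. field. repeat split; lra. Qed.

End FIN2.

Lemma decay al eps : 0 < al -> 0 < eps -> exists N0 : nat, forall N : nat, (N0 <= N)%nat -> (1 <= N)%nat ->
  Rpower (INR N) (- al) <= eps.
Proof. intros Hal Heps. set (B := Rpower (/ eps) (/ al)).
 assert (HB : 0 < B) by (unfold B, Rpower; apply exp_pos).
 destruct (INR_archimed 1 B ltac:(lra)) as [N0 HN0]. exists N0. intros N HN HN1.
 assert (INR N0 <= INR N) by (apply le_INR; lia).
 assert (0 < INR N) by (apply lt_0_INR; lia).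
 rewrite Rpower_Ropp. 
 assert (Rpower B al <= Rpower (INR N) al) by (apply Rle_Rpower_l; lra).
 unfold B in H1. rewrite Rpower_mult in H1. replace (/ al * al) with 1 in H1 by (field; lra).
 rewrite Rpower_1 in H1 by (apply Rinv_0_lt_compat; lra).
 replace eps with (/ / eps) by (field; lra). apply Rinv_le_contravar. apply Rinv_0_lt_compat; lra. exact H1. Qed.

Theorem lemma7p5 :
  forall (CV phis omega sigma p : R),
    0 < CV -> 0 < phis <= 2/3 -> 0 < 1/3 - omega < phis / 2 ->
    0 < sigma -> 2 <= p ->
  exists (c K : R) (N0 : nat), 0 < c /\ 0 < K /\
  forall (N : nat) (V : nat -> R) (m : Cx -> Cx) (Em : R),
    (N0 <= N)%nat -> (1 <= N)%nat ->
    let etas := Rpower (INR N) (- phis) in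
    let t := Rpower (INR N) (omega - 1/3) in
    (forall i j, (i <= j < N)%nat -> V i <= V j) ->
    eta_regular N V etas CV ->
    is_mfc N V t m ->
    is_left_edge m Em ->
    forall z : Cx,
      in_D N sigma Em z -> Re z >= Em - t ^ 2 ->
      let kappa := Rabs (Re z - Em) in
      (forall i, (i < N)%nat ->
         Cabs (Csub (RtoC (V i)) (xi t m z)) >= c * (t ^ 2 + Im z + t * Im (m z))) /\
      moment N V (xi t m z) p <=
         K * (t + sqrt (kappa + Im z)) / Rpower (t ^ 2 + Im (xi t m z)) (p - 1) /\
      t + sqrt (kappa + Im z) <= K * (t + Im (m z)).
Proof.
 intros CV phis omega sigma p HCV Hphis Hom Hsig Hp.
 set (al := 1/3 - omega). set (be := phis - 2 * al).
 assert (Hal : 0 < al) by (unfold al; lra). assert (Hbe : 0 < be) by (unfold be, al; lra).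
 assert (Htau : 0 < tau0 CV).
 { unfold tau0. destruct (consts_pos CV HCV) as (? & ? & ? & ? & ?). apply Rinv_0_lt_compat. lra. }
 assert (HC4 : 0 < 16 * CV * CV + 4) by (pose proof (sq_nn CV); lra).
 destruct (decay al (tau0 CV) Hal Htau) as [N1 HN1].
 destruct (decay be (/ (16 * CV * CV + 4)) Hbe ltac:(apply Rinv_0_lt_compat; lra)) as [N2 HN2].
 set (Km := 2 * (K6c CV + 1) / Rpower (c1 CV) (p - 2)).
 assert (HK3 : 1 <= K3c CV).
 { unfold K3c, K2c, K4c, K5c. destruct (consts_pos CV HCV) as (? & ? & ? & ? & ?).
   assert (0 <= 4 * CV * (Lc CV + 2 * Cloc CV + 3 + 2) * (2 * Lc CV + 2 * Cloc CV + Khic CV + 1 + 2)) by (repeat apply Rmult_le_pos; lra). lra. }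
 assert (HKm : 0 <= Km).
 { unfold Km, K6c, K7c. destruct (consts_pos CV HCV) as (? & ? & ? & ? & ?). pose proof (sq_nn (CV+1)).
   assert (0 <= (CV + 1) * (2 * Cloc CV + 2 * Khic CV + 1 + 2)) by (apply Rmult_le_pos; lra).
   unfold Rdiv. apply Rmult_le_pos. lra. left; apply Rinv_0_lt_compat. unfold Rpower; apply exp_pos. }
 exists (c1 CV), (K3c CV + Km), (N1 + N2)%nat.
 split. unfold c1. apply Rinv_0_lt_compat. pose proof (sq_nn CV). lra.
 split. lra.
 intros N V m Em HN0 HN etas t Hmono Hreg Hm Hedge z HD Hz kappa.
 assert (HNp : 0 < INR N) by (apply lt_0_INR; lia).
 assert (He : 0 < etas) by (unfold etas, Rpower; apply exp_pos).
 assert (Ht : 0 < t) by (unfold t, Rpower; apply exp_pos).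
 assert (Ht1 : t = Rpower (INR N) (- al)) by (unfold t, al; f_equal; ring).
 assert (Hts : t <= tau0 CV) by (rewrite Ht1; apply HN1; lia).
 assert (Hs4 : (16 * CV * CV + 4) * etas <= t * t).
 { assert (etas = Rpower (INR N) (- be) * t * t).
   { unfold etas. rewrite Ht1. rewrite <- !Rpower_plus. f_equal. unfold be. ring. }
   pose proof (HN2 N ltac:(lia) HN).
   assert (0 < t * t) by nra.
   rewrite H. replace ((16 * CV * CV + 4) * (Rpower (INR N) (- be) * t * t)) with (((16 * CV * CV + 4) * Rpower (INR N) (- be)) * (t * t)) by ring.
   assert ((16 * CV * CV + 4) * Rpower (INR N) (- be) <= 1).
   { replace 1 with ((16 * CV * CV + 4) * / (16 * CV * CV + 4)) by (field; lra). apply Rmult_le_compat_l; lra. }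
   nra. }
 assert (Hs1' := Hs1 CV etas t He Hs4).
 destruct (Em_bounds N V m Em CV etas t HN HCV Hreg He Ht Hts Hs1' Hm Hedge) as [_ [Em3 Em4]].
 assert (Hz1 : 0 < Im z <= 10 /\ -3/4 <= Re z <= 3/4).
 { destruct HD as [(A1 & A2 & _) | (A1 & A2)].
   - lra.
   - assert (0 < Rpower (INR N) (sigma - 2/3)) by (unfold Rpower; apply exp_pos). lra. }
 destruct Hz1 as [Hz1 Hz2].
 replace (t ^ 2) with (t * t) in * by ring.
 assert (Hxi : Im (xi t m z) = Im z + t * Im (m z)) by reflexivity.
 split; [| split].
 - intros i Hi. rewrite Cabs_Dd. replace (t * t + Im z + t * Im (m z)) with (t * t + Im (xi t m z)) by (rewrite Hxi; ring).
   apply Rle_ge. apply (part1_full N V m CV etas t HN HCV Hreg He Ht Hts Hs4 Hm z i Hz1 Hz2 Hi).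
 -
   pose proof (momentz N V m Em CV etas t HN HCV Hreg He Ht Hts Hs4 Hm Hedge z p Hz1 Hz2 Hp) as HM.
   fold Km in HM. fold kappa in HM.
   eapply Rle_trans. exact HM.
   assert (0 < Rpower (t * t + Im (xi t m z)) (p - 1)) by (unfold Rpower; apply exp_pos).
   assert (0 <= t + sqrt (kappa + Im z)) by (pose proof (sqrt_pos (kappa + Im z)); lra).
   unfold Rdiv. apply Rmult_le_compat_r. left; apply Rinv_0_lt_compat; lra.
   apply Rmult_le_compat_r; lra.
 - pose proof (part3 N V m Em CV etas t HN HCV Hreg He Ht Hts Hs4 Hm Hedge z Hz1 Hz2 ltac:(lra)) as H3.
   fold kappa in H3. eapply Rle_trans. exact H3. apply Rmult_le_compat_r.
   pose proof (solz N V m CV t HN HCV Ht Hts Hm z Hz1 Hz2) as (_ & _ & _ & HM & _). lra. lra.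
Qed.
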